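(* Let $f$ be a $C^1$ diffeomorphism of $M=\mathbb{R}^d/\mathbb{Z}^d$. If $x\in M$ is regularly hyperbolic, then $\Gamma_{o(x)}$ has a continuous inverse on $\mathcal{N}$.
   Context: Tangent spaces identified with $\mathbb{R}^d$. $o(x)=(f^k(x))_{k}$, $(\Gamma_{\mathbf{x}}\eta)_k=\eta_k-Df(x_{k-1})\eta_{k-1}$. $\mathcal{N}$ is the Fréchet space of sequences $(\eta_k)_{k\in\mathbb{Z}}$ in $\mathbb{R}^d$ with $\limsup_{|k|\to\infty}\frac1{|k|}\log|\eta_k|\le0$, topologized by the norms $\|\eta\|_n=\sup_k e^{-|k|/n}|\eta_k|$, $n\in\mathbb{N}$. Regular hyperbolicity of $x$: with $x_k=f^k(x)$, there are $0<\lambda<1$, $Df$-invariant splittings $T_{x_k}M=E^s(x_k)\oplus E^u(x_k)$, and for each small $\varepsilon>0$ a constant $c(x,\varepsilon)$ with $|Df^j(x_k)\eta|\le c\lambda^je^{\varepsilon|k|}|\eta|$ on $E^s(x_k)$, $|Df^{-j}(x_k)\eta|\le c\lambda^je^{\varepsilon|k|}|\eta|$ on $E^u(x_k)$ ($j>0$), and $|\eta^s|,|\eta^u|\le ce^{\varepsilon|k|}|\eta|$ for the splitting $\eta=\eta^s+\eta^u$ in $T_{x_k}M$. *)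

(* Defs.v *)
From Stdlib Require Vectors.Fin.
From Stdlib Require Import Reals ZArith.
Open Scope R_scope.

(** Vectors of R^d (tangent spaces of M = R^d/Z^d identified with R^d) *)
Definition vec (d : nat) := Fin.t d -> R.
Definition mat (d : nat) := Fin.t d -> Fin.t d -> R.

Fixpoint fsum {d : nat} : (Fin.t d -> R) -> R :=
  match d with
  | O => fun _ => 0
  | S d' => fun f => f Fin.F1 + fsum (fun i => f (Fin.FS i))
  end.

Definition vadd {d} (u v : vec d) : vec d := fun i => u i + v i.
Definition vsub {d} (u v : vec d) : vec d := fun i => u i - v i.
Definition vscale {d} (a : R) (v : vec d) : vec d := fun i => a * v i.
Definition vzero {d} : vec d := fun _ => 0.
Definition vnorm {d} (v : vec d) : R := sqrt (fsum (fun i => v i * v i)).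
Definition mapply {d} (A : mat d) (v : vec d) : vec d :=
  fun i => fsum (fun j => A i j * v j).

Definition is_int_vec {d} (v : vec d) : Prop := forall i, exists z : Z, v i = IZR z.

Definition has_derivative {d} (F : vec d -> vec d) (A : mat d) (x : vec d) : Prop :=
  forall eps, eps > 0 -> exists delta, delta > 0 /\
    forall h, vnorm h < delta ->
      vnorm (vsub (vsub (F (vadd x h)) (F x)) (mapply A h)) <= eps * vnorm h.

Definition is_C1 {d} (F : vec d -> vec d) (DF : vec d -> mat d) : Prop :=
  (forall x, has_derivative F (DF x) x) /\
  (forall x i j eps, eps > 0 -> exists delta, delta > 0 /\
      forall y, vnorm (vsub y x) < delta -> Rabs (DF y i j - DF x i j) < eps).

(** F : R^d -> R^d descends to a map of the torus R^d/Z^d *)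
Definition descends {d} (F : vec d -> vec d) : Prop :=
  forall x n, is_int_vec n -> is_int_vec (vsub (F (vadd x n)) (F x)).

(** f is a C^1 diffeomorphism of M = R^d/Z^d, given by a lift F with
    derivative DF, whose inverse f^{-1} is given by a lift G with derivative DG. *)
Definition torus_C1_diffeo {d} (F G : vec d -> vec d) (DF DG : vec d -> mat d) : Prop :=
  is_C1 F DF /\ is_C1 G DG /\ descends F /\ descends G /\
  (forall x, is_int_vec (vsub (F (G x)) x)) /\
  (forall x, is_int_vec (vsub (G (F x)) x)).

(** lift of the orbit x_k = f^k(x), k in Z *)
Definition orbit {d} (F G : vec d -> vec d) (x : vec d) (k : Z) : vec d :=
  if (0 <=? k)%Z then Nat.iter (Z.to_nat k) F x else Nat.iter (Z.to_nat (- k)) G x.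

Fixpoint Dfpow {d} (DF : vec d -> mat d) (X : Z -> vec d) (j : nat) (k : Z) (v : vec d)
  : vec d :=
  match j with
  | O => v
  | S j' => mapply (DF (X (k + Z.of_nat j')%Z)) (Dfpow DF X j' k v)
  end.

(** Df^{-j}(x_k) v = D(f^{-1})(x_{k-j+1}) ... D(f^{-1})(x_k) v, j >= 0 *)
Fixpoint Dfinvpow {d} (DG : vec d -> mat d) (X : Z -> vec d) (j : nat) (k : Z) (v : vec d)
  : vec d :=
  match j with
  | O => v
  | S j' => mapply (DG (X (k - Z.of_nat j')%Z)) (Dfinvpow DG X j' k v)
  end.

Definition is_subspace {d} (E : vec d -> Prop) : Prop :=
  E vzero /\ (forall u v, E u -> E v -> E (vadd u v)) /\
  (forall a v, E v -> E (vscale a v)).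

Definition absZ (k : Z) : R := IZR (Z.abs k).

Definition regularly_hyperbolic {d} (F G : vec d -> vec d) (DF DG : vec d -> mat d)
  (x : vec d) : Prop :=
  let X := orbit F G x in
  exists lambda, 0 < lambda < 1 /\
  exists Es Eu : Z -> vec d -> Prop,
    (forall k, is_subspace (Es k) /\ is_subspace (Eu k) /\
       (forall v, exists vs vu, Es k vs /\ Eu k vu /\ v = vadd vs vu) /\
       (forall v, Es k v -> Eu k v -> v = vzero)) /\
    (forall k, (forall v, Es k v -> Es (k + 1)%Z (mapply (DF (X k)) v)) /\
               (forall w, Es (k + 1)%Z w -> exists v, Es k v /\ mapply (DF (X k)) v = w) /\
               (forall v, Eu k v -> Eu (k + 1)%Z (mapply (DF (X k)) v)) /\
               (forall w, Eu (k + 1)%Z w -> exists v, Eu k v /\ mapply (DF (X k)) v = w)) /\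
    exists eps0, eps0 > 0 /\
    forall eps, 0 < eps < eps0 -> exists c : R,
      (forall k (j : nat) v, (0 < j)%nat -> Es k v ->
         vnorm (Dfpow DF X j k v) <= c * lambda ^ j * exp (eps * absZ k) * vnorm v) /\
      (forall k (j : nat) v, (0 < j)%nat -> Eu k v ->
         vnorm (Dfinvpow DG X j k v) <= c * lambda ^ j * exp (eps * absZ k) * vnorm v) /\
      (forall k v vs vu, Es k vs -> Eu k vu -> v = vadd vs vu ->
         vnorm vs <= c * exp (eps * absZ k) * vnorm v /\
         vnorm vu <= c * exp (eps * absZ k) * vnorm v).

Definition seqR (d : nat) := Z -> vec d.

Definition Gamma {d} (DF : vec d -> mat d) (X : Z -> vec d) (eta : seqR d) : seqR d :=
  fun k => vsub (eta k) (mapply (DF (X (k - 1)%Z)) (eta (k - 1)%Z)).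

(** eta in N : limsup_{|k|->oo} (1/|k|) log |eta_k| <= 0, i.e.
    for all delta > 0, eventually |eta_k| <= exp(delta |k|). *)
Definition inN {d} (eta : seqR d) : Prop :=
  forall delta, delta > 0 -> exists K : Z, forall k : Z,
    (K <= Z.abs k)%Z -> vnorm (eta k) <= exp (delta * absZ k).

Definition seqsub {d} (a b : seqR d) : seqR d := fun k => vsub (a k) (b k).

(** ||eta||_n < r, where ||eta||_n = sup_k e^{-|k|/n} |eta_k| *)
Definition normN_lt {d} (n : nat) (eta : seqR d) (r : R) : Prop :=
  exists r', r' < r /\ forall k, exp (- (absZ k / INR n)) * vnorm (eta k) <= r'.

(** open subsets of the Frechet space N (topology of the norms ||.||_n, n >= 1;
    the norms increase with n, so balls form a neighbourhood base) *)
Definition openN {d} (U : seqR d -> Prop) : Prop :=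
  forall eta, U eta -> inN eta /\
    exists n : nat, (0 < n)%nat /\ exists r, r > 0 /\
      forall zeta, inN zeta -> normN_lt n (seqsub zeta eta) r -> U zeta.

Definition continuousN {d} (T : seqR d -> seqR d) : Prop :=
  forall V, openN V -> openN (fun eta => inN eta /\ V (T eta)).

(* Main.v *)
Require Import Defs.
From Stdlib Require Import Reals ZArith Lra Lia List.
From Stdlib Require Import ClassicalEpsilon FunctionalExtensionality.
From Coquelicot Require Import Coquelicot.
Open Scope R_scope.

Lemma fsum_ext {d} (f g : Fin.t d -> R) : (forall i, f i = g i) -> fsum f = fsum g.
Proof. induction d; simpl; intros H; auto. rewrite H, (IHd _ (fun i => g (Fin.FS i))); auto. Qed.

Lemma fsum_plus {d} (f g : Fin.t d -> R) : fsum (fun i => f i + g i) = fsum f + fsum g.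
Proof. induction d; simpl; [lra|]. rewrite (IHd (fun i => f (Fin.FS i)) (fun i => g (Fin.FS i))). lra. Qed.

Lemma fsum_scal {d} (a : R) (f : Fin.t d -> R) : fsum (fun i => a * f i) = a * fsum f.
Proof. induction d; simpl; [lra|]. rewrite (IHd (fun i => f (Fin.FS i))). lra. Qed.

Lemma fsum_const {d} (a : R) : fsum (fun _ : Fin.t d => a) = INR d * a.
Proof. induction d; simpl; [lra|]. rewrite IHd. destruct d; simpl; lra. Qed.

Lemma fsum_le {d} (f g : Fin.t d -> R) : (forall i, f i <= g i) -> fsum f <= fsum g.
Proof. induction d; simpl; intros H; [lra|]. specialize (IHd (fun i => f (Fin.FS i)) (fun i => g (Fin.FS i))). 
  pose proof (H Fin.F1). assert (fsum (fun i => f (Fin.FS i)) <= fsum (fun i => g (Fin.FS i))) by (apply IHd; auto). lra. Qed.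

Lemma fsum_nonneg {d} (f : Fin.t d -> R) : (forall i, 0 <= f i) -> 0 <= fsum f.
Proof. intros H. pose proof (fsum_le (fun _ => 0) f H). rewrite fsum_const in H0. lra. Qed.

Lemma fsum_elem {d} (f : Fin.t d -> R) : (forall i, 0 <= f i) -> forall i, f i <= fsum f.
Proof. induction d; intros H i. - inversion i.
  - pattern i; apply Fin.caseS'; simpl.
    + pose proof (fsum_nonneg (fun i => f (Fin.FS i)) (fun i => H (Fin.FS i))). lra.
    + intros p. pose proof (IHd (fun i => f (Fin.FS i)) (fun i => H (Fin.FS i)) p). pose proof (H Fin.F1). simpl in *. lra. Qed.

Lemma fsum_abs {d} (f : Fin.t d -> R) : Rabs (fsum f) <= fsum (fun i => Rabs (f i)).
Proof. induction d; simpl. - rewrite Rabs_R0; lra.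
  - pose proof (IHd (fun i => f (Fin.FS i))). pose proof (Rabs_triang (f Fin.F1) (fsum (fun i => f (Fin.FS i)))). lra. Qed.

Definition l1 {d} (v : vec d) : R := fsum (fun i => Rabs (v i)).

Lemma l1_nonneg {d} (v : vec d) : 0 <= l1 v.
Proof. apply fsum_nonneg. intros; apply Rabs_pos. Qed.

Lemma fsum_sq_le {d} (v : vec d) : fsum (fun i => v i * v i) <= l1 v * l1 v.
Proof. unfold l1. induction d; simpl; [lra|].
  pose proof (IHd (fun i => v (Fin.FS i))). pose proof (l1_nonneg (fun i => v (Fin.FS i))). unfold l1 in H0.
  pose proof (Rabs_pos (v Fin.F1)). 
  assert (v Fin.F1 * v Fin.F1 = Rabs (v Fin.F1) * Rabs (v Fin.F1)).
  { rewrite <- Rabs_mult. rewrite Rabs_right; [lra|]. apply Rle_ge; apply Rle_0_sqr. }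
  nra. Qed.

Lemma vnorm_nonneg {d} (v : vec d) : 0 <= vnorm v.
Proof. apply sqrt_pos. Qed.

Lemma vnorm_le_l1 {d} (v : vec d) : vnorm v <= l1 v.
Proof. unfold vnorm. rewrite <- (sqrt_square (l1 v)) by apply l1_nonneg.
  apply sqrt_le_1_alt. apply fsum_sq_le. Qed.

Lemma coord_le {d} (v : vec d) i : Rabs (v i) <= vnorm v.
Proof. unfold vnorm. rewrite <- sqrt_Rsqr_abs. apply sqrt_le_1_alt. unfold Rsqr.
  apply (fsum_elem (fun i => v i * v i)). intros; apply Rle_0_sqr. Qed.

Lemma l1_le_vnorm {d} (v : vec d) : l1 v <= INR d * vnorm v.
Proof. unfold l1. rewrite <- fsum_const. apply fsum_le. intros; apply coord_le. Qed.

Lemma l1_add {d} (u v : vec d) : l1 (vadd u v) <= l1 u + l1 v.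
Proof. unfold l1, vadd. rewrite <- fsum_plus. apply fsum_le. intros; apply Rabs_triang. Qed.

Lemma l1_scale {d} a (v : vec d) : l1 (vscale a v) = Rabs a * l1 v.
Proof. unfold l1, vscale. rewrite <- fsum_scal. apply fsum_ext; intros; apply Rabs_mult. Qed.

Definition Dc (d : nat) : R := INR d + 1.
Lemma Dc_pos d : 1 <= Dc d.
Proof. unfold Dc. pose proof (pos_INR d). lra. Qed.

Lemma vnorm_add {d} (u v : vec d) : vnorm (vadd u v) <= Dc d * (vnorm u + vnorm v).
Proof. pose proof (vnorm_le_l1 (vadd u v)). pose proof (l1_add u v).
  pose proof (l1_le_vnorm u). pose proof (l1_le_vnorm v). pose proof (vnorm_nonneg u). pose proof (vnorm_nonneg v).
  unfold Dc. nra. Qed.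

Lemma vnorm_scale {d} a (v : vec d) : vnorm (vscale a v) = Rabs a * vnorm v.
Proof. unfold vnorm, vscale. rewrite (fsum_ext _ (fun i => (a*a) * (v i * v i))) by (intros; ring).
  rewrite fsum_scal. rewrite sqrt_mult_alt by apply Rle_0_sqr. rewrite <- sqrt_Rsqr_abs. reflexivity. Qed.

Lemma vsub_as_add {d} (u v : vec d) : vsub u v = vadd u (vscale (-1) v).
Proof. apply functional_extensionality; intros; unfold vsub, vadd, vscale; ring. Qed.

Lemma vnorm_sub {d} (u v : vec d) : vnorm (vsub u v) <= Dc d * (vnorm u + vnorm v).
Proof. rewrite vsub_as_add. pose proof (vnorm_add u (vscale (-1) v)). rewrite vnorm_scale in H.
  replace (Rabs (-1)) with 1 in H by (rewrite Rabs_left; lra). lra. Qed.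

Lemma vnorm_zero_eq {d} (v : vec d) : vnorm v <= 0 -> v = vzero.
Proof. intros H. apply functional_extensionality; intros i. pose proof (coord_le v i).
  unfold vzero. pose proof (Rabs_pos (v i)). assert (Rabs (v i) = 0) by lra.
  destruct (Req_dec (v i) 0); auto. apply Rabs_no_R0 in H2; tauto. Qed.

Lemma vnorm_vzero {d} : vnorm (@vzero d) = 0.
Proof. unfold vnorm, vzero. rewrite (fsum_ext _ (fun _ => 0)) by (intros; ring). rewrite fsum_const.
  rewrite Rmult_0_r. apply sqrt_0. Qed.

Definition mnorm {d} (A : mat d) : R := fsum (fun i => fsum (fun j => Rabs (A i j))).

Lemma mnorm_nonneg {d} (A : mat d) : 0 <= mnorm A.
Proof. apply fsum_nonneg; intros; apply fsum_nonneg; intros; apply Rabs_pos. Qed.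

Lemma mapply_bound {d} (A : mat d) v : vnorm (mapply A v) <= mnorm A * vnorm v.
Proof. eapply Rle_trans; [apply vnorm_le_l1|]. unfold l1, mapply, mnorm.
  rewrite Rmult_comm, <- fsum_scal. apply fsum_le; intros i.
  eapply Rle_trans; [apply fsum_abs|]. rewrite <- fsum_scal. apply fsum_le; intros j.
  rewrite Rabs_mult. pose proof (coord_le v j). pose proof (Rabs_pos (A i j)). nra. Qed.

Lemma mapply_add {d} (A : mat d) u v : mapply A (vadd u v) = vadd (mapply A u) (mapply A v).
Proof. apply functional_extensionality; intros i. unfold mapply, vadd. rewrite <- fsum_plus.
  apply fsum_ext; intros; ring. Qed.

Lemma mapply_scale {d} (A : mat d) a v : mapply A (vscale a v) = vscale a (mapply A v).
Proof. apply functional_extensionality; intros i. unfold mapply, vscale. rewrite <- fsum_scal.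
  apply fsum_ext; intros; ring. Qed.

Lemma mapply_sub {d} (A : mat d) u v : mapply A (vsub u v) = vsub (mapply A u) (mapply A v).
Proof. apply functional_extensionality; intros i. unfold mapply, vsub.
  rewrite (fsum_ext _ (fun j => A i j * u j + (-1) * (A i j * v j))) by (intros; ring).
  rewrite fsum_plus, fsum_scal. ring. Qed.

Lemma mapply_zero {d} (A : mat d) : mapply A vzero = vzero.
Proof. apply functional_extensionality; intros i. unfold mapply, vzero.
  rewrite (fsum_ext _ (fun _ => 0)) by (intros; ring). rewrite fsum_const. ring. Qed.

Definition ebasis {d} (j : Fin.t d) : vec d := fun i => if Fin.eq_dec i j then 1 else 0.

Lemma fsum_delta {d} (j : Fin.t d) (g : Fin.t d -> R) :
  fsum (fun i => g i * (if Fin.eq_dec i j then 1 else 0)) = g j.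
Proof. induction d. - inversion j.
  - pattern j; apply Fin.caseS'; simpl.
    + destruct (Fin.eq_dec Fin.F1 Fin.F1) as [_|n]; [|congruence].
      rewrite (fsum_ext _ (fun _ => 0)). rewrite fsum_const. ring.
      intros i. destruct (Fin.eq_dec (Fin.FS i) Fin.F1); [discriminate|ring].
    + intros p. destruct (Fin.eq_dec Fin.F1 (Fin.FS p)); [discriminate|].
      rewrite (fsum_ext _ (fun i => g (Fin.FS i) * (if Fin.eq_dec i p then 1 else 0))).
      rewrite IHd. ring.
      intros i. destruct (Fin.eq_dec (Fin.FS i) (Fin.FS p)), (Fin.eq_dec i p); auto.
      * apply Fin.FS_inj in e. congruence.
      * subst; congruence. Qed.

Lemma mapply_ebasis {d} (A : mat d) i j : mapply A (ebasis j) i = A i j.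
Proof. unfold mapply, ebasis. apply fsum_delta. Qed.

Lemma mat_ext {d} (A B : mat d) : (forall v, mapply A v = mapply B v) -> forall i j, A i j = B i j.
Proof. intros H i j. rewrite <- !mapply_ebasis, H. reflexivity. Qed.

Lemma int_sub {d} (u v : vec d) : is_int_vec u -> is_int_vec v -> is_int_vec (vsub u v).
Proof. intros Hu Hv i. destruct (Hu i) as [a Ha], (Hv i) as [b Hb]. exists (a - b)%Z.
  unfold vsub. rewrite Ha, Hb, minus_IZR. reflexivity. Qed.

Lemma int_small_zero (z : Z) : Rabs (IZR z) < 1 -> z = 0%Z.
Proof. intros H. destruct (Z.lt_trichotomy z 0) as [h|[h|h]]; auto.
  - assert (IZR z <= -1) by (apply IZR_le; lia). rewrite Rabs_left in H; lra.
  - assert (1 <= IZR z) by (apply IZR_le; lia). rewrite Rabs_right in H; lra. Qed.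

Lemma int_vec_small {d} (n : vec d) : is_int_vec n -> vnorm n < 1 -> n = vzero.
Proof. intros H Hn. apply functional_extensionality; intros i. destruct (H i) as [z Hz].
  pose proof (coord_le n i). rewrite Hz in *. unfold vzero. rewrite (int_small_zero z); [reflexivity|lra]. Qed.

Ltac vext := apply functional_extensionality; intro; unfold vadd, vsub, vscale, vzero; ring.

Lemma lin_bound {d} (F : vec d -> vec d) A x : has_derivative F A x ->
  exists L delta, 0 <= L /\ delta > 0 /\ forall h, vnorm h < delta ->
    vnorm (vsub (F (vadd x h)) (F x)) <= L * vnorm h.
Proof. intros H. destruct (H 1 ltac:(lra)) as [delta [Hd Hh]].
  exists (Dc d * (1 + mnorm A)), delta. pose proof (Dc_pos d). pose proof (mnorm_nonneg A).
  split; [nra|split; auto]. intros h Hlt.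
  replace (vsub (F (vadd x h)) (F x)) with (vadd (vsub (vsub (F (vadd x h)) (F x)) (mapply A h)) (mapply A h)) by vext.
  eapply Rle_trans; [apply vnorm_add|]. pose proof (Hh h Hlt). pose proof (mapply_bound A h).
  pose proof (vnorm_nonneg h). nra. Qed.

Lemma frac_bound eps D L : eps > 0 -> D > 0 -> 0 <= L -> D * (eps / (2 * D * (L + 1)) * L) <= eps / 2.
Proof. intros. replace (D * (eps / (2 * D * (L + 1)) * L)) with ((eps/2) * (L / (L+1))) by (field; lra).
  assert (L / (L+1) <= 1). { apply Rmult_le_reg_r with (L+1); [lra|]. unfold Rdiv. rewrite Rmult_assoc, Rinv_l by lra. lra. }
  assert (0 <= L / (L+1)) by (unfold Rdiv; apply Rmult_le_pos; [lra|left; apply Rinv_0_lt_compat; lra]). nra. Qed.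

Lemma chain {d} (F G : vec d -> vec d) A B x : has_derivative F A x -> has_derivative G B (F x) ->
  forall eps, eps > 0 -> exists delta, delta > 0 /\ forall h, vnorm h < delta ->
    vnorm (vsub (vsub (G (F (vadd x h))) (G (F x))) (mapply B (mapply A h))) <= eps * vnorm h.
Proof. intros HF HG eps Heps.
  destruct (lin_bound F A x HF) as [L [dL [HL0 [HdL HL]]]].
  pose proof (Dc_pos d) as HD. pose proof (mnorm_nonneg B) as HB.
  set (e1 := eps / (2 * Dc d * (L + 1))). set (e2 := eps / (2 * Dc d * (mnorm B + 1))).
  assert (He1 : e1 > 0) by (unfold e1; apply Rdiv_lt_0_compat; nra).
  assert (He2 : e2 > 0) by (unfold e2; apply Rdiv_lt_0_compat; nra).
  destruct (HG e1 He1) as [dG [HdG HGb]]. destruct (HF e2 He2) as [dF [HdF HFb]].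
  exists (Rmin (Rmin dL dF) (dG / (L + 1))). split.
  { apply Rmin_pos; [apply Rmin_pos; auto|apply Rdiv_lt_0_compat; lra]. }
  intros h Hh. pose proof (Rmin_l (Rmin dL dF) (dG / (L + 1))). pose proof (Rmin_r (Rmin dL dF) (dG / (L + 1))).
  pose proof (Rmin_l dL dF). pose proof (Rmin_r dL dF).
  set (k := vsub (F (vadd x h)) (F x)).
  assert (Hk : vnorm k <= L * vnorm h) by (apply HL; lra).
  assert (Hk2 : vnorm k < dG).
  { pose proof (vnorm_nonneg h). assert (vnorm h * (L+1) < dG).
    { assert (Hq : vnorm h < dG / (L+1)) by lra. apply (Rmult_lt_compat_r (L+1)) in Hq; [|lra].
      unfold Rdiv in Hq. rewrite Rmult_assoc, Rinv_l in Hq by lra. lra. } nra. }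
  assert (EF : F (vadd x h) = vadd (F x) k) by (unfold k; vext).
  replace (vsub (vsub (G (F (vadd x h))) (G (F x))) (mapply B (mapply A h)))
    with (vadd (vsub (vsub (G (vadd (F x) k)) (G (F x))) (mapply B k)) (mapply B (vsub k (mapply A h)))).
  2:{ rewrite EF, mapply_sub. vext. }
  eapply Rle_trans; [apply vnorm_add|].
  pose proof (HGb k Hk2). pose proof (HFb h ltac:(lra)). fold k in H4.
  pose proof (mapply_bound B (vsub k (mapply A h))).
  assert (vnorm (mapply B (vsub k (mapply A h))) <= mnorm B * (e2 * vnorm h)).
  { eapply Rle_trans; [apply H5|]. apply Rmult_le_compat_l; auto. }
  pose proof (vnorm_nonneg h). pose proof (vnorm_nonneg k).
  assert (e1 * vnorm k <= e1 * L * vnorm h) by nra.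
  assert (Dc d * (e1 * L) <= eps / 2).
  { unfold e1. apply frac_bound; lra. }
  assert (Dc d * (mnorm B * e2) <= eps / 2).
  { unfold e2. rewrite (Rmult_comm (mnorm B)). apply frac_bound; lra. }
  nra. Qed.

Lemma uniq_lin {d} (L1 L2 : vec d -> vec d) :
  (forall a v, L1 (vscale a v) = vscale a (L1 v)) ->
  (forall a v, L2 (vscale a v) = vscale a (L2 v)) ->
  (forall eps, eps > 0 -> exists delta, delta > 0 /\ forall h, vnorm h < delta ->
      vnorm (vsub (L1 h) (L2 h)) <= eps * vnorm h) ->
  forall v, L1 v = L2 v.
Proof. intros H1 H2 H v. set (w := vsub (L1 v) (L2 v)).
  assert (Hw : forall eps, eps > 0 -> vnorm w <= eps * vnorm v).
  { intros eps Heps. destruct (H eps Heps) as [delta [Hd Hh]].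
    pose proof (vnorm_nonneg v). set (t := delta / (2 * (vnorm v + 1))).
    assert (Ht : t > 0) by (unfold t; apply Rdiv_lt_0_compat; lra).
    assert (Hn : vnorm (vscale t v) < delta).
    { rewrite vnorm_scale, Rabs_right by lra. unfold t.
      apply Rle_lt_trans with (delta / 2). 
      - unfold Rdiv. rewrite Rinv_mult. 
        assert (vnorm v * / (vnorm v + 1) <= 1).
        { apply Rmult_le_reg_r with (vnorm v + 1); [lra|]. rewrite Rmult_assoc, Rinv_l by lra. lra. }
        assert (0 < / (vnorm v + 1)) by (apply Rinv_0_lt_compat; lra).
        assert (0 < /2) by lra. nra.
      - lra. }
    pose proof (Hh _ Hn). rewrite H1, H2 in H3.
    replace (vsub (vscale t (L1 v)) (vscale t (L2 v))) with (vscale t w) in H3 by (unfold w; vext).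
    rewrite !vnorm_scale, Rabs_right in H3 by lra. nra. }
  assert (vnorm w <= 0).
  { destruct (Rle_dec (vnorm w) 0); auto. exfalso. pose proof (vnorm_nonneg v).
    pose proof (Hw (vnorm w / (2 * (vnorm v + 1)))). 
    assert (vnorm w / (2 * (vnorm v + 1)) > 0) by (apply Rdiv_lt_0_compat; lra).
    specialize (H3 H4).
    assert (vnorm w / (2 * (vnorm v + 1)) * vnorm v <= vnorm w / 2).
    { unfold Rdiv. rewrite Rinv_mult. 
      assert (vnorm v * / (vnorm v + 1) <= 1).
      { apply Rmult_le_reg_r with (vnorm v + 1); [lra|]. rewrite Rmult_assoc, Rinv_l by lra. lra. }
      assert (0 < / (vnorm v + 1)) by (apply Rinv_0_lt_compat; lra). nra. }
    lra. }
  apply vnorm_zero_eq in H0. apply functional_extensionality; intros i.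
  assert (w i = 0) by (rewrite H0; reflexivity). unfold w, vsub in H3. lra. Qed.

Lemma small_pos a b : a > 0 -> b >= 0 -> exists t, t > 0 /\ t < a /\ t * b < 1.
Proof. intros. exists (Rmin (a/2) (1 / (2 * (b + 1)))). 
  assert (0 < 1 / (2 * (b + 1))) by (apply Rdiv_lt_0_compat; lra).
  pose proof (Rmin_l (a/2) (1 / (2 * (b + 1)))). pose proof (Rmin_r (a/2) (1 / (2 * (b + 1)))).
  split; [apply Rmin_pos; lra|]. split; [lra|].
  assert (1 / (2 * (b + 1)) * b < 1).
  { replace (1 / (2 * (b + 1)) * b) with (b / (2*(b+1))) by (field; lra).
    apply Rmult_lt_reg_r with (2*(b+1)); [lra|]. unfold Rdiv. rewrite Rmult_assoc, Rinv_l by lra. lra. }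
  assert (0 < Rmin (a/2) (1 / (2 * (b + 1)))) by (apply Rmin_pos; lra). nra. Qed.

Lemma periodic {d} (F : vec d -> vec d) DF n : is_C1 F DF -> descends F -> is_int_vec n ->
  forall w v, mapply (DF (vadd w n)) v = mapply (DF w) v.
Proof. intros [HD _] Hdesc Hn w.
  destruct (lin_bound F _ _ (HD (vadd w n))) as [L1 [d1 [HL1 [Hd1 H1]]]].
  destruct (lin_bound F _ _ (HD w)) as [L2 [d2 [HL2 [Hd2 H2]]]].
  pose proof (Dc_pos d).
  destruct (small_pos (Rmin d1 d2) (Dc d * (L1 + L2)) ltac:(apply Rmin_pos; lra) ltac:(nra)) as [r [Hr0 [Hr1 Hr2]]].
  pose proof (Rmin_l d1 d2). pose proof (Rmin_r d1 d2).
  assert (Heq : forall h, vnorm h < r -> vsub (F (vadd (vadd w n) h)) (F (vadd w n)) = vsub (F (vadd w h)) (F w)).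
  { intros h Hh. 
    set (P := vsub (vsub (F (vadd (vadd w n) h)) (F (vadd w n))) (vsub (F (vadd w h)) (F w))).
    assert (HP : P = vsub (vsub (F (vadd (vadd w h) n)) (F (vadd w h))) (vsub (F (vadd w n)) (F w))).
    { unfold P. replace (vadd (vadd w h) n) with (vadd (vadd w n) h) by vext. vext. }
    assert (Pint : is_int_vec P) by (rewrite HP; apply int_sub; apply Hdesc; auto).
    assert (Pn : vnorm P < 1).
    { unfold P. eapply Rle_lt_trans; [apply vnorm_sub|].
      pose proof (H1 h ltac:(lra)). pose proof (H2 h ltac:(lra)). pose proof (vnorm_nonneg h).
      assert ((L1 + L2) * vnorm h <= (L1 + L2) * r) by (apply Rmult_le_compat_l; lra).
      assert (Dc d * ((L1 + L2) * vnorm h) <= Dc d * ((L1 + L2) * r)) by (apply Rmult_le_compat_l; lra).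
      nra. }
    pose proof (int_vec_small P Pint Pn). apply functional_extensionality; intros i.
    assert (P i = 0) by (rewrite H4; reflexivity). unfold P, vsub in H5. unfold vsub. lra. }
  apply uniq_lin; [intros; apply mapply_scale|intros; apply mapply_scale|].
  intros eps Heps. set (e := eps / (2 * Dc d)). assert (He : e > 0) by (unfold e; apply Rdiv_lt_0_compat; lra).
  destruct (HD (vadd w n) e He) as [a1 [Ha1 Ka1]]. destruct (HD w e He) as [a2 [Ha2 Ka2]].
  exists (Rmin r (Rmin a1 a2)). split; [apply Rmin_pos; [lra|apply Rmin_pos; lra]|].
  intros h Hh. pose proof (Rmin_l r (Rmin a1 a2)). pose proof (Rmin_r r (Rmin a1 a2)).
  pose proof (Rmin_l a1 a2). pose proof (Rmin_r a1 a2).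
  pose proof (Heq h ltac:(lra)). pose proof (Ka1 h ltac:(lra)). pose proof (Ka2 h ltac:(lra)).
  rewrite H8 in H9.
  replace (vsub (mapply (DF (vadd w n)) h) (mapply (DF w) h)) with
    (vsub (vsub (vsub (F (vadd w h)) (F w)) (mapply (DF w) h)) (vsub (vsub (F (vadd w h)) (F w)) (mapply (DF (vadd w n)) h))) by vext.
  eapply Rle_trans; [apply vnorm_sub|]. 
  assert (Dc d * (e + e) = eps) by (unfold e; field; lra). pose proof (vnorm_nonneg h). nra. Qed.

Lemma inv_deriv {d} (F G : vec d -> vec d) DF DG : is_C1 F DF -> is_C1 G DG ->
  (forall x, is_int_vec (vsub (G (F x)) x)) ->
  forall y v, mapply (DG (F y)) (mapply (DF y) v) = v.
Proof. intros [HF _] [HG _] Hint y.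
  pose proof (chain F G (DF y) (DG (F y)) y (HF y) (HG (F y))) as Hc.
  pose proof (Dc_pos d).
  destruct (Hc 1 ltac:(lra)) as [d1 [Hd1 H1]].
  set (K := mnorm (DG (F y)) * mnorm (DF y)).
  assert (HK : 0 <= K) by (unfold K; apply Rmult_le_pos; apply mnorm_nonneg).
  destruct (small_pos d1 (Dc d * (Dc d * (1 + K) + 1)) Hd1 ltac:(nra)) as [r [Hr0 [Hr1 Hr2]]].
  assert (Heq : forall h, vnorm h < r -> vsub (G (F (vadd y h))) (G (F y)) = h).
  { intros h Hh. set (P := vsub (vsub (G (F (vadd y h))) (vadd y h)) (vsub (G (F y)) y)).
    assert (Pint : is_int_vec P) by (apply int_sub; auto).
    assert (HP : P = vsub (vsub (G (F (vadd y h))) (G (F y))) h) by (unfold P; vext).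
    assert (Pn : vnorm P < 1).
    { rewrite HP. eapply Rle_lt_trans; [apply vnorm_sub|].
      pose proof (H1 h ltac:(lra)).
      replace (vsub (G (F (vadd y h))) (G (F y))) with
        (vadd (vsub (vsub (G (F (vadd y h))) (G (F y))) (mapply (DG (F y)) (mapply (DF y) h))) (mapply (DG (F y)) (mapply (DF y) h))) by vext.
      pose proof (vnorm_add (vsub (vsub (G (F (vadd y h))) (G (F y))) (mapply (DG (F y)) (mapply (DF y) h))) (mapply (DG (F y)) (mapply (DF y) h))).
      pose proof (mapply_bound (DG (F y)) (mapply (DF y) h)). pose proof (mapply_bound (DF y) h).
      pose proof (mnorm_nonneg (DG (F y))). pose proof (mnorm_nonneg (DF y)). pose proof (vnorm_nonneg h).
      assert (vnorm (mapply (DG (F y)) (mapply (DF y) h)) <= K * vnorm h) by (unfold K; nra).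
      set (Q := vnorm (vadd (vsub (vsub (G (F (vadd y h))) (G (F y))) (mapply (DG (F y)) (mapply (DF y) h))) (mapply (DG (F y)) (mapply (DF y) h)))) in *.
      assert (Q <= Dc d * (1 + K) * vnorm h) by nra.
      assert (Dc d * (Q + vnorm h) <= Dc d * (Dc d * (1 + K) + 1) * vnorm h) by nra.
      assert ((Dc d * (Dc d * (1 + K) + 1)) * vnorm h <= (Dc d * (Dc d * (1 + K) + 1)) * r) by (apply Rmult_le_compat_l; nra).
      nra. }
    pose proof (int_vec_small P Pint Pn). rewrite HP in H0. apply functional_extensionality; intros i.
    assert (Hi := f_equal (fun z => z i) H0). simpl in Hi. unfold vsub, vzero in Hi. unfold vsub. lra. }
  intros v. symmetry. apply (uniq_lin (fun v => v) (fun v => mapply (DG (F y)) (mapply (DF y) v))).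
  - auto.
  - intros. rewrite !mapply_scale. auto.
  - intros eps Heps. destruct (Hc eps Heps) as [a [Ha Ka]]. exists (Rmin a r). split; [apply Rmin_pos; lra|].
    intros h Hh. pose proof (Rmin_l a r). pose proof (Rmin_r a r). pose proof (Ka h ltac:(lra)).
    rewrite (Heq h ltac:(lra)) in H3. auto. Qed.

Lemma orbit_succ_pos {d} (F G : vec d -> vec d) x k : (0 <= k)%Z ->
  orbit F G x (k + 1)%Z = F (orbit F G x k).
Proof. intros Hk. unfold orbit. destruct (0 <=? k + 1)%Z eqn:E1; [|apply Z.leb_gt in E1; lia].
  destruct (0 <=? k)%Z eqn:E2; [|apply Z.leb_gt in E2; lia].
  replace (Z.to_nat (k + 1)) with (S (Z.to_nat k)) by lia. reflexivity. Qed.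

Lemma orbit_pred_neg {d} (F G : vec d -> vec d) x k : (k < 0)%Z ->
  orbit F G x k = G (orbit F G x (k + 1)).
Proof. intros Hk. unfold orbit. destruct (0 <=? k)%Z eqn:E2; [apply Z.leb_le in E2; lia|].
  destruct (0 <=? k + 1)%Z eqn:E1.
  - apply Z.leb_le in E1. assert (k = -1)%Z by lia. subst. simpl. reflexivity.
  - apply Z.leb_gt in E1. replace (Z.to_nat (- k)) with (S (Z.to_nat (- (k + 1)))) by lia. reflexivity. Qed.

Lemma orbit_inv {d} (F G : vec d -> vec d) DF DG x : torus_C1_diffeo F G DF DG ->
  forall k v, mapply (DG (orbit F G x (k + 1))) (mapply (DF (orbit F G x k)) v) = v /\
              mapply (DF (orbit F G x k)) (mapply (DG (orbit F G x (k + 1))) v) = v.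
Proof. intros [HF [HG [dF [dG [HFG HGF]]]]] k v.
  pose proof (inv_deriv F G DF DG HF HG HGF) as I1.
  pose proof (inv_deriv G F DG DF HG HF HFG) as I2.
  destruct (Z_le_gt_dec 0 k) as [Hk|Hk].
  - rewrite orbit_succ_pos by auto. set (y := orbit F G x k). split; [apply I1|].
    set (m := vsub (G (F y)) y).
    assert (E : G (F y) = vadd y m) by (unfold m; vext).
    rewrite <- (periodic F DF m HF dF (HGF y) y). rewrite <- E. apply I2.
  - rewrite (orbit_pred_neg F G x k) by lia. set (z := orbit F G x (k + 1)). split; [|apply I2].
    set (m := vsub (F (G z)) z).
    assert (E : F (G z) = vadd z m) by (unfold m; vext).
    rewrite <- (periodic G DG m HG dG (HFG z) z). rewrite <- E. apply I1. Qed.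

Lemma cover1 (rho : R -> R) : (forall t, rho t > 0) ->
  exists T : list R, forall s, 0 <= s <= 1 -> exists t, In t T /\ Rabs (s - t) < rho t.
Proof. intros Hr.
  set (E := fun b => 0 <= b <= 1 /\ exists T : list R, forall s, 0 <= s <= b -> exists t, In t T /\ Rabs (s - t) < rho t).
  assert (E0 : E 0).
  { split; [lra|]. exists (0 :: nil). intros s Hs. exists 0. split; [left; auto|].
    replace (s - 0) with 0 by lra. rewrite Rabs_R0. apply Hr. }
  assert (Eb : bound E) by (exists 1; intros b [Hb _]; lra).
  destruct (completeness E Eb (ex_intro _ 0 E0)) as [m [Hub Hlub]].
  assert (Hm0 : 0 <= m) by (apply Hub; auto).
  assert (Hm1 : m <= 1) by (apply Hlub; intros b [Hb _]; lra).
  assert (Hb : exists b, E b /\ m - rho m < b).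
  { apply Classical_Pred_Type.not_all_not_ex. intros Hn. 
    assert (m <= m - rho m). { apply Hlub. intros b Eb'. destruct (Rle_dec b (m - rho m)); auto.
      exfalso. apply (Hn b). split; auto; lra. }
    pose proof (Hr m). lra. }
  destruct Hb as [b [[Hb01 [T HT]] Hbm]].
  assert (Hbm' : b <= m) by (apply Hub; split; auto; exists T; auto).
  assert (Cov : forall s, 0 <= s <= m + rho m / 2 -> exists t, In t (m :: T) /\ Rabs (s - t) < rho t).
  { intros s Hs. destruct (Rle_dec s b).
    - destruct (HT s ltac:(lra)) as [t [Ht1 Ht2]]. exists t; split; [right; auto|auto].
    - exists m. split; [left; auto|]. pose proof (Hr m). apply Rabs_def1; lra. }
  destruct (Rle_dec 1 (m + rho m / 2)).
  - exists (m :: T). intros s Hs. apply Cov. lra.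
  - exfalso. assert (E (m + rho m / 2)).
    { split; [pose proof (Hr m); lra|]. exists (m :: T). auto. }
    pose proof (Hub _ H). pose proof (Hr m). lra. Qed.

Definition in_cube {d} (y : vec d) : Prop := forall i, 0 <= y i <= 1.

Definition vcons {d} (t : R) (y : vec d) : vec (S d) := fun i => Fin.caseS' i (fun _ => R) t y.

Lemma cover (d : nat) : forall g : vec d -> R, (forall y, g y > 0) ->
  exists l : list (vec d), forall z, in_cube z -> exists y, In y l /\ forall i, Rabs (z i - y i) < g y.
Proof. induction d; intros g Hg.
  - exists (vzero :: nil). intros z _. exists vzero. split; [left; auto|]. intros i; inversion i.
  - assert (Hpos : forall t y, g (vcons t y) / 2 > 0) by (intros; pose proof (Hg (vcons t y)); lra).
    set (Lt := fun t => proj1_sig (constructive_indefinite_description _ (IHd (fun y => g (vcons t y) / 2) (Hpos t)))).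
    assert (HLt : forall t z, in_cube z -> exists y, In y (Lt t) /\ forall i, Rabs (z i - y i) < g (vcons t y) / 2).
    { intros t. exact (proj2_sig (constructive_indefinite_description _ (IHd (fun y => g (vcons t y) / 2) (Hpos t)))). }
    set (rho := fun t => fold_right (fun y r => Rmin (g (vcons t y) / 2) r) 1 (Lt t)).
    assert (Hrho : forall t, rho t > 0).
    { intros t. unfold rho. induction (Lt t); simpl; [lra|]. apply Rmin_pos; auto. apply Hpos. }
    assert (Hrho2 : forall t y, In y (Lt t) -> rho t <= g (vcons t y) / 2).
    { intros t y. unfold rho. induction (Lt t); simpl; [tauto|]. intros [E|E].
      - subst. apply Rmin_l. - eapply Rle_trans; [apply Rmin_r|]. auto. }
    destruct (cover1 rho Hrho) as [T HT].
    exists (flat_map (fun t => map (vcons t) (Lt t)) T). intros z Hz.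
    assert (Hz1 : 0 <= z Fin.F1 <= 1) by apply Hz.
    destruct (HT (z Fin.F1) Hz1) as [t [Ht1 Ht2]].
    assert (Hz2 : in_cube (fun i => z (Fin.FS i))) by (intros i; apply Hz).
    destruct (HLt t _ Hz2) as [y [Hy1 Hy2]].
    exists (vcons t y). split.
    + apply in_flat_map. exists t. split; auto. apply in_map. auto.
    + pose proof (Hrho2 t y Hy1). pose proof (Hpos t y). intros i. pattern i. apply Fin.caseS'.
      * replace (vcons t y Fin.F1) with t by reflexivity. lra.
      * intros p. replace (vcons t y (Fin.FS p)) with (y p) by reflexivity. specialize (Hy2 p). simpl in Hy2. lra. Qed.

Lemma bounded_cube {d} (Phi : vec d -> R) :
  (forall y, exists delta, delta > 0 /\ exists M, forall z, (forall i, Rabs (z i - y i) < delta) -> Phi z <= M) ->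
  exists M, forall z, in_cube z -> Phi z <= M.
Proof. intros H.
  assert (H' : forall y, exists p : R * R, fst p > 0 /\ forall z, (forall i, Rabs (z i - y i) < fst p) -> Phi z <= snd p).
  { intros y. destruct (H y) as [de [Hde [M HM]]]. exists (de, M). simpl. auto. }
  set (P := fun y => proj1_sig (constructive_indefinite_description _ (H' y))).
  assert (HP : forall y, fst (P y) > 0 /\ forall z, (forall i, Rabs (z i - y i) < fst (P y)) -> Phi z <= snd (P y)).
  { intros y. exact (proj2_sig (constructive_indefinite_description _ (H' y))). }
  destruct (cover d (fun y => fst (P y)) (fun y => proj1 (HP y))) as [l Hl].
  exists (fold_right (fun y r => Rmax (snd (P y)) r) 0 l). intros z Hz.
  destruct (Hl z Hz) as [y [Hy1 Hy2]]. apply Rle_trans with (snd (P y)).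
  - apply (proj2 (HP y)); auto.
  - clear Hl Hy2. induction l; simpl in *; [tauto|]. destruct Hy1 as [E|E].
    + subst. apply Rmax_l. + eapply Rle_trans; [apply IHl; auto|apply Rmax_r]. Qed.

Lemma fin_min {d} (P : Fin.t d -> R -> Prop) :
  (forall i, exists delta, delta > 0 /\ P i delta) ->
  (forall i a b, 0 < a <= b -> P i b -> P i a) ->
  exists delta, delta > 0 /\ forall i, P i delta.
Proof. revert P; induction d; intros P H Hmono.
  - exists 1. split; [lra|]. intros i; inversion i.
  - destruct (IHd (fun i => P (Fin.FS i))) as [d1 [Hd1 H1]].
    + intros i; apply H. + intros i a b; apply Hmono.
    + destruct (H Fin.F1) as [d0 [Hd0 H0]]. exists (Rmin d0 d1). split; [apply Rmin_pos; auto|].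
      intros i. pattern i. apply Fin.caseS'.
      * apply Hmono with d0; auto. split; [apply Rmin_pos; auto|apply Rmin_l].
      * intros p. apply Hmono with d1; auto. split; [apply Rmin_pos; auto|apply Rmin_r]. Qed.

Lemma DF_bounded {d} (F : vec d -> vec d) DF : is_C1 F DF -> descends F ->
  exists K, 0 <= K /\ forall y, mnorm (DF y) <= K.
Proof. intros HC Hdesc. pose proof HC as [_ Hcont].
  assert (Hloc : forall y, exists delta, delta > 0 /\ exists M, forall z, (forall i, Rabs (z i - y i) < delta) -> mnorm (DF z) <= M).
  { intros y.
    destruct (fin_min (fun i de => forall j z, vnorm (vsub z y) < de -> Rabs (DF z i j - DF y i j) < 1)) as [de [Hde Hdz]].
    - intros i. apply (fin_min (fun j de => forall z, vnorm (vsub z y) < de -> Rabs (DF z i j - DF y i j) < 1)).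
      + intros j. apply (Hcont y i j 1 ltac:(lra)).
      + intros j a b Hab Hb z Hz. apply Hb. lra.
    - intros i a b Hab Hb j z Hz. apply Hb. lra.
    - exists (de / Dc d). pose proof (Dc_pos d). split; [apply Rdiv_lt_0_compat; lra|].
      exists (mnorm (DF y) + INR d * INR d). intros z Hz.
      assert (Hn : vnorm (vsub z y) < de).
      { eapply Rle_lt_trans; [apply vnorm_le_l1|]. unfold l1.
        apply Rle_lt_trans with (fsum (fun _ : Fin.t d => de / Dc d)).
        - apply fsum_le. intros i. left. apply Hz.
        - rewrite fsum_const. unfold Dc in *. pose proof (pos_INR d).
          replace (INR d * (de / (INR d + 1))) with (de * (INR d / (INR d + 1))) by (field; lra).
          assert (INR d / (INR d + 1) < 1).
          { apply Rmult_lt_reg_r with (INR d + 1); [lra|]. unfold Rdiv. rewrite Rmult_assoc, Rinv_l by lra. lra. }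
          nra. }
      unfold mnorm. rewrite <- fsum_const, <- fsum_plus. apply fsum_le. intros i.
      rewrite <- (Rmult_1_r (INR d)), <- fsum_const, <- fsum_plus. apply fsum_le. intros j.
      pose proof (Hdz i j z Hn). pose proof (Rabs_triang_inv (DF z i j) (DF y i j)). lra. }
  destruct (bounded_cube _ Hloc) as [M HM].
  exists (Rmax M 0). split; [apply Rmax_r|]. intros y.
  set (n := fun i => IZR (Int_part (y i))). set (f := vsub y n).
  assert (Hn : is_int_vec n) by (intros i; exists (Int_part (y i)); reflexivity).
  assert (Hf : in_cube f).
  { intros i. unfold f, vsub, n. pose proof (base_Int_part (y i)). lra. }
  assert (E : y = vadd f n) by (unfold f; apply functional_extensionality; intros; unfold vadd, vsub; ring).
  assert (mnorm (DF y) = mnorm (DF f)).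
  { unfold mnorm. rewrite E. apply fsum_ext; intros i; apply fsum_ext; intros j.
    rewrite (mat_ext _ _ (periodic F DF n HC Hdesc Hn f)). reflexivity. }
  rewrite H. eapply Rle_trans; [apply HM; auto|apply Rmax_l]. Qed.

Lemma absZ_nonneg k : 0 <= absZ k.
Proof. unfold absZ. apply IZR_le. lia. Qed.

Lemma absZ_sub k (j : nat) : absZ (k - Z.of_nat j) <= absZ k + INR j.
Proof. unfold absZ. rewrite INR_IZR_INZ, <- plus_IZR. apply IZR_le. lia. Qed.

Lemma absZ_add k (j : nat) : absZ (k + Z.of_nat j) <= absZ k + INR j.
Proof. unfold absZ. rewrite INR_IZR_INZ, <- plus_IZR. apply IZR_le. lia. Qed.

Lemma absZ_pred k : absZ (k - 1) <= absZ k + 1.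
Proof. unfold absZ. rewrite <- plus_IZR. apply IZR_le. lia. Qed.

Lemma exp_nat b (n : nat) : exp (b * INR n) = exp b ^ n.
Proof. induction n; simpl. - rewrite Rmult_0_r, exp_0. ring.
  - rewrite <- IHn. rewrite <- exp_plus. f_equal. destruct n; simpl; ring. Qed.

Lemma exp_ge1 y : 0 <= y -> 1 <= exp y.
Proof. intros. destruct (Req_dec y 0). subst; rewrite exp_0; lra. left. pose proof (exp_ineq1 y H0). lra. Qed.

Lemma exp_ge_lin y : 0 <= y -> 1 + y <= exp y.
Proof. intros. destruct (Req_dec y 0). subst; rewrite exp_0; lra. left. apply exp_ineq1; auto. Qed.

Lemma exp_shift b k (j : nat) kj : 0 <= b -> absZ kj <= absZ k + INR j ->
  exp (b * absZ kj) <= exp b ^ j * exp (b * absZ k).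
Proof. intros Hb H. rewrite <- exp_nat, <- exp_plus. destruct (Req_dec (b * absZ kj) (b * INR j + b * absZ k)).
  rewrite H0; lra. left. apply exp_increasing. nra. Qed.

Fixpoint rsum (f : nat -> R) (n : nat) : R := match n with O => 0 | S n' => rsum f n' + f n' end.

Lemma geom_fin q n : 0 <= q < 1 -> rsum (fun j => q ^ j) n <= / (1 - q).
Proof. intros Hq. assert (E : rsum (fun j => q ^ j) n = (1 - q ^ n) / (1 - q)).
  { induction n; simpl. field; lra. rewrite IHn. field; lra. }
  rewrite E. pose proof (pow_le q n ltac:(lra)). unfold Rdiv. 
  assert (0 < / (1 - q)) by (apply Rinv_0_lt_compat; lra). nra. Qed.

Lemma rsum_le f g n : (forall j, f j <= g j) -> rsum f n <= rsum g n.
Proof. intros H; induction n; simpl; [lra|]. pose proof (H n); lra. Qed.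

Lemma rsum_scal c f n : rsum (fun j => c * f j) n = c * rsum f n.
Proof. induction n; simpl; [ring|]. rewrite IHn; ring. Qed.

Lemma limit_arg s T R q : 0 <= q < 1 -> 0 <= R -> (forall J, s <= T + R * q ^ J) -> s <= T.
Proof. intros Hq HR H. destruct (Rle_dec s T); auto. exfalso.
  assert (Rabs q < 1) by (rewrite Rabs_right; lra).
  destruct (pow_lt_1_zero q H0 ((s - T) / (R + 1))) as [N HN].
  { apply Rdiv_lt_0_compat; lra. }
  specialize (HN N (le_n N)). specialize (H N). rewrite Rabs_right in HN by (apply Rle_ge, pow_le; lra).
  assert (R * q ^ N <= (R + 1) * q ^ N) by (pose proof (pow_le q N ltac:(lra)); nra).
  assert ((R + 1) * q ^ N < s - T).
  { apply Rmult_lt_compat_l with (r := R + 1) in HN; [|lra]. 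
    replace ((R + 1) * ((s - T) / (R + 1))) with (s - T) in HN by (field; lra). auto. }
  lra. Qed.

Lemma bounded_range {d} (eta : seqR d) (N : nat) : exists C, forall k, (Z.abs k <= Z.of_nat N)%Z -> vnorm (eta k) <= C.
Proof. induction N.
  - exists (vnorm (eta 0%Z)). intros k Hk. assert (k = 0%Z) by lia. subst. lra.
  - destruct IHN as [C HC]. exists (Rmax C (Rmax (vnorm (eta (Z.of_nat (S N)))) (vnorm (eta (- Z.of_nat (S N))%Z)))).
    intros k Hk. destruct (Z_le_gt_dec (Z.abs k) (Z.of_nat N)).
    + eapply Rle_trans; [apply HC; auto|apply Rmax_l].
    + assert (k = Z.of_nat (S N) \/ k = (- Z.of_nat (S N))%Z) as [E|E] by lia; subst.
      * eapply Rle_trans; [|apply Rmax_r]. apply Rmax_l.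
      * eapply Rle_trans; [|apply Rmax_r]. apply Rmax_r. Qed.

Lemma global_bound {d} (eta : seqR d) : inN eta -> forall a, a > 0 ->
  exists M, 0 <= M /\ forall k, vnorm (eta k) <= M * exp (a * absZ k).
Proof. intros H a Ha. destruct (H a Ha) as [K HK].
  destruct (bounded_range eta (Z.to_nat K)) as [C HC].
  exists (Rmax 1 C). split; [pose proof (Rmax_l 1 C); lra|]. intros k.
  assert (He : 1 <= exp (a * absZ k)) by (apply exp_ge1; pose proof (absZ_nonneg k); nra).
  pose proof (Rmax_l 1 C). pose proof (Rmax_r 1 C).
  destruct (Z_le_gt_dec K (Z.abs k)).
  - eapply Rle_trans; [apply HK; auto|]. nra.
  - assert (vnorm (eta k) <= C) by (apply HC; lia). pose proof (vnorm_nonneg (eta k)). nra. Qed.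

Lemma eventually_le K b delta : 0 <= b < delta -> exists N : Z, forall k, (N <= Z.abs k)%Z ->
  K * exp (b * absZ k) <= exp (delta * absZ k).
Proof. intros Hb. exists (up (Rabs K / (delta - b))). intros k Hk.
  destruct (archimed (Rabs K / (delta - b))) as [H1 _].
  assert (Ht : Rabs K / (delta - b) < absZ k).
  { unfold absZ. apply Rlt_le_trans with (IZR (up (Rabs K / (delta - b)))); auto. apply IZR_le; auto. }
  assert (Rabs K < (delta - b) * absZ k).
  { apply Rmult_lt_compat_l with (r := delta - b) in Ht; [|lra].
    replace ((delta - b) * (Rabs K / (delta - b))) with (Rabs K) in Ht by (field; lra). auto. }
  pose proof (exp_ge_lin ((delta - b) * absZ k) ltac:(pose proof (absZ_nonneg k); nra)).
  replace (delta * absZ k) with ((delta - b) * absZ k + b * absZ k) by ring. rewrite exp_plus.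
  pose proof (exp_pos (b * absZ k)). pose proof (Rle_abs K). nra. Qed.

Lemma inN_of_bound {d} (xi : seqR d) :
  (forall delta, delta > 0 -> exists C b, 0 <= b < delta /\ forall k, vnorm (xi k) <= C * exp (b * absZ k)) -> inN xi.
Proof. intros H delta Hd. destruct (H delta Hd) as [C [b [Hb HC]]].
  destruct (eventually_le C b delta Hb) as [N HN]. exists N. intros k Hk.
  eapply Rle_trans; [apply HC|apply HN; auto]. Qed.

Lemma lam_gap lam : 0 < lam < 1 -> exists T, T > 0 /\ lam * exp T < 1.
Proof. intros H. exists (ln (/ lam) / 2).
  assert (Hl : 1 < / lam) by (rewrite <- Rinv_1; apply Rinv_lt_contravar; lra).
  assert (Hln : 0 < ln (/ lam)).
  { destruct (Rle_dec (ln (/ lam)) 0); [|lra]. exfalso.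
    assert (exp (ln (/ lam)) <= exp 0). { destruct r. left; apply exp_increasing; auto. rewrite H0; lra. }
    rewrite exp_ln, exp_0 in H0 by lra. lra. }
  split; [lra|]. assert (exp (ln (/ lam) / 2) < exp (ln (/ lam))) by (apply exp_increasing; lra).
  rewrite exp_ln in H0 by lra. apply Rmult_lt_compat_l with (r := lam) in H0; [|lra].
  rewrite Rinv_r in H0 by lra. lra. Qed.

Lemma exp_mono_le a b : a <= b -> exp a <= exp b.
Proof. intros [H|H]; [left; apply exp_increasing; auto|subst; lra]. Qed.

Fixpoint vsum {d} (w : nat -> vec d) (n : nat) : vec d :=
  match n with O => vzero | S n' => vadd (vsum w n') (w n') end.

Lemma l1_vzero {d} : l1 (@vzero d) = 0.
Proof. unfold l1, vzero. rewrite (fsum_ext _ (fun _ => 0)). rewrite fsum_const; ring. intros; apply Rabs_R0. Qed.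

Lemma vsum_bound {d} (w : nat -> vec d) K q n : 0 <= q < 1 -> (forall j, vnorm (w j) <= K * q ^ j) ->
  vnorm (vsum w n) <= INR d * (K * / (1 - q)).
Proof. intros Hq H. eapply Rle_trans; [apply vnorm_le_l1|].
  assert (l1 (vsum w n) <= rsum (fun j => INR d * (K * q ^ j)) n).
  { induction n; simpl. rewrite l1_vzero; lra.
    eapply Rle_trans; [apply l1_add|]. pose proof (l1_le_vnorm (w n)). pose proof (H n). pose proof (pos_INR d).
    assert (INR d * vnorm (w n) <= INR d * (K * q ^ n)) by (apply Rmult_le_compat_l; auto). lra. }
  eapply Rle_trans; [apply H0|]. rewrite (rsum_scal (INR d)), rsum_scal.
  apply Rmult_le_compat_l; [apply pos_INR|].
  assert (0 <= K). { pose proof (H 0%nat). pose proof (vnorm_nonneg (w 0%nat)). simpl in H1. lra. }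
  apply Rmult_le_compat_l; auto. apply geom_fin; auto. Qed.

Definition vseries {d} (w : nat -> vec d) : vec d := fun i => Series (fun j => w j i).

Lemma geom_series K q : 0 <= q < 1 -> ex_series (fun j => K * q ^ j) /\ Series (fun j => K * q ^ j) = K * / (1 - q).
Proof. intros Hq. assert (Hr : Rabs q < 1) by (rewrite Rabs_right; lra).
  pose proof (is_series_geom q Hr). split.
  - eexists. eapply is_series_ext; [|apply (is_series_scal_l K _ _ H)]. intros n; reflexivity.
  - rewrite Series_scal_l. f_equal. apply is_series_unique; auto. Qed.

Lemma vseries_ex {d} (w : nat -> vec d) K q : 0 <= q < 1 -> (forall j, vnorm (w j) <= K * q ^ j) ->
  forall i, ex_series (fun j => Rabs (w j i)) /\ ex_series (fun j => w j i).
Proof. intros Hq H i. destruct (geom_series K q Hq) as [Hex _].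
  assert (E : ex_series (fun j => Rabs (w j i))).
  { apply (ex_series_le (fun j => Rabs (w j i)) (fun j => K * q ^ j)); auto.
    intros n. change (norm (Rabs (w n i))) with (Rabs (Rabs (w n i))). rewrite Rabs_Rabsolu.
    eapply Rle_trans; [apply coord_le|apply H]. }
  split; auto. apply ex_series_Rabs; auto. Qed.

Lemma vseries_bound {d} (w : nat -> vec d) K q : 0 <= q < 1 -> (forall j, vnorm (w j) <= K * q ^ j) ->
  vnorm (vseries w) <= INR d * (K * / (1 - q)).
Proof. intros Hq H. eapply Rle_trans; [apply vnorm_le_l1|]. unfold l1, vseries.
  rewrite <- fsum_const. apply fsum_le. intros i. destruct (vseries_ex w K q Hq H i) as [E1 E2].
  destruct (geom_series K q Hq) as [G1 G2].
  eapply Rle_trans; [apply Series_Rabs; auto|]. rewrite <- G2. apply Series_le; auto.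
  intros n. split; [apply Rabs_pos|]. eapply Rle_trans; [apply coord_le|apply H]. Qed.

Lemma vseries_shift {d} (w : nat -> vec d) : (forall i, ex_series (fun j => w j i)) ->
  vseries w = vadd (w 0%nat) (vseries (fun j => w (S j))).
Proof. intros H. apply functional_extensionality; intros i. unfold vseries, vadd. apply Series_incr_1. auto. Qed.

Lemma fsum_Series {d} (f : Fin.t d -> nat -> R) : (forall i, ex_series (f i)) ->
  ex_series (fun n => fsum (fun i => f i n)) /\ fsum (fun i => Series (f i)) = Series (fun n => fsum (fun i => f i n)).
Proof. induction d; intros H; simpl.
  - destruct (geom_series 0 0 ltac:(lra)) as [G1 G2]. split.
    + eapply ex_series_ext; [|apply G1]. intros n; simpl; ring.
    + rewrite (Series_ext _ (fun j => 0 * 0 ^ j)) by (intros; ring). rewrite G2. ring.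
  - destruct (IHd (fun i => f (Fin.FS i)) (fun i => H (Fin.FS i))) as [E1 E2]. split.
    + destruct (H Fin.F1) as [l1' H1], E1 as [l2 H2]. eexists. eapply is_series_ext; [|apply (is_series_plus _ _ _ _ H1 H2)]. intros n; reflexivity.
    + rewrite E2. rewrite Series_plus; auto. Qed.

Lemma mapply_vseries {d} (A : mat d) (w : nat -> vec d) : (forall i, ex_series (fun j => w j i)) ->
  mapply A (vseries w) = vseries (fun j => mapply A (w j)).
Proof. intros H. apply functional_extensionality; intros i. unfold mapply, vseries.
  rewrite (fsum_ext _ (fun j' => Series (fun n => A i j' * w n j'))) by (intros; rewrite Series_scal_l; auto).
  apply fsum_Series. intros j'. destruct (H j') as [l Hl]. eexists. eapply is_series_ext; [|apply (is_series_scal_l (A i j') _ _ Hl)]. intros n; reflexivity. Qed.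

Section Main.
Context {d : nat} (F G : vec d -> vec d) (DF DG : vec d -> mat d) (x : vec d).
Hypothesis TD : torus_C1_diffeo F G DF DG.
Local Notation X := (orbit F G x).
Context (lam : R) (Es Eu : Z -> vec d -> Prop) (eps0 : R).
Hypothesis Hlam : 0 < lam < 1.
Hypothesis Hsplit : forall k, is_subspace (Es k) /\ is_subspace (Eu k) /\
       (forall v, exists vs vu, Es k vs /\ Eu k vu /\ v = vadd vs vu) /\
       (forall v, Es k v -> Eu k v -> v = vzero).
Hypothesis Hinv : forall k, (forall v, Es k v -> Es (k + 1)%Z (mapply (DF (X k)) v)) /\
               (forall w, Es (k + 1)%Z w -> exists v, Es k v /\ mapply (DF (X k)) v = w) /\
               (forall v, Eu k v -> Eu (k + 1)%Z (mapply (DF (X k)) v)) /\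
               (forall w, Eu (k + 1)%Z w -> exists v, Eu k v /\ mapply (DF (X k)) v = w).
Hypothesis Heps0 : eps0 > 0.
Hypothesis Hc : forall eps, 0 < eps < eps0 -> exists c : R,
      (forall k (j : nat) v, (0 < j)%nat -> Es k v ->
         vnorm (Dfpow DF X j k v) <= c * lam ^ j * exp (eps * absZ k) * vnorm v) /\
      (forall k (j : nat) v, (0 < j)%nat -> Eu k v ->
         vnorm (Dfinvpow DG X j k v) <= c * lam ^ j * exp (eps * absZ k) * vnorm v) /\
      (forall k v vs vu, Es k vs -> Eu k vu -> v = vadd vs vu ->
         vnorm vs <= c * exp (eps * absZ k) * vnorm v /\
         vnorm vu <= c * exp (eps * absZ k) * vnorm v).

Lemma sub_closed (E : vec d -> Prop) : is_subspace E -> forall u v, E u -> E v -> E (vsub u v).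
Proof. intros [H0 [Ha Hs]] u v Hu Hv. rewrite vsub_as_add. apply Ha; auto. Qed.

Lemma split_ex k v : exists vs, Es k vs /\ Eu k (vsub v vs).
Proof. destruct (Hsplit k) as [_ [_ [Hs _]]]. destruct (Hs v) as [vs [vu [H1 [H2 H3]]]].
  exists vs. split; auto. replace (vsub v vs) with vu; auto. subst. vext. Qed.

Definition ps k v : vec d := proj1_sig (constructive_indefinite_description _ (split_ex k v)).
Definition pu k v : vec d := vsub v (ps k v).

Lemma ps_Es k v : Es k (ps k v).
Proof. exact (proj1 (proj2_sig (constructive_indefinite_description _ (split_ex k v)))). Qed.
Lemma pu_Eu k v : Eu k (pu k v).
Proof. exact (proj2 (proj2_sig (constructive_indefinite_description _ (split_ex k v)))). Qed.
Lemma ps_pu k v : v = vadd (ps k v) (pu k v).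
Proof. unfold pu. vext. Qed.

Lemma decomp k a b : Es k a -> Eu k b -> ps k (vadd a b) = a /\ pu k (vadd a b) = b.
Proof. intros Ha Hb. destruct (Hsplit k) as [Ss [Su [_ Hz]]].
  remember (vadd a b) as v eqn:Ev. pose proof (ps_Es k v). pose proof (pu_Eu k v). pose proof (ps_pu k v).
  assert (E1 : vsub a (ps k v) = vsub (pu k v) b).
  { apply functional_extensionality; intros i. assert (Hi := f_equal (fun z => z i) H1). unfold vadd in Hi. simpl in Hi.
    assert (Hv : v i = a i + b i) by (rewrite Ev; reflexivity). unfold vsub. lra. }
  assert (Z1 : vsub a (ps k v) = vzero).
  { apply Hz. apply sub_closed; auto. rewrite E1. apply sub_closed; auto. }
  assert (ps k v = a). { apply functional_extensionality; intros i. assert (Hi := f_equal (fun z => z i) Z1). unfold vsub, vzero in Hi. simpl in Hi. lra. }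
  split; auto. unfold pu. rewrite H2. rewrite Ev. vext. Qed.

Lemma Dfpow_sub j k u v : Dfpow DF X j k (vsub u v) = vsub (Dfpow DF X j k u) (Dfpow DF X j k v).
Proof. induction j; simpl; auto. rewrite IHj, mapply_sub. auto. Qed.
Lemma Dfpow_add j k u v : Dfpow DF X j k (vadd u v) = vadd (Dfpow DF X j k u) (Dfpow DF X j k v).
Proof. induction j; simpl; auto. rewrite IHj, mapply_add. auto. Qed.
Lemma Dfinvpow_sub j k u v : Dfinvpow DG X j k (vsub u v) = vsub (Dfinvpow DG X j k u) (Dfinvpow DG X j k v).
Proof. induction j; simpl; auto. rewrite IHj, mapply_sub. auto. Qed.

Lemma Dfpow_shift j m v : Dfpow DF X j (m + 1) (mapply (DF (X m)) v) = Dfpow DF X (S j) m v.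
Proof. induction j.
  - simpl. replace (m + 0)%Z with m by lia. auto.
  - change (Dfpow DF X (S j) (m + 1) (mapply (DF (X m)) v)) with
      (mapply (DF (X (m + 1 + Z.of_nat j)%Z)) (Dfpow DF X j (m + 1) (mapply (DF (X m)) v))).
    rewrite IHj. change (Dfpow DF X (S (S j)) m v) with (mapply (DF (X (m + Z.of_nat (S j))%Z)) (Dfpow DF X (S j) m v)).
    replace (m + 1 + Z.of_nat j)%Z with (m + Z.of_nat (S j))%Z by lia. auto. Qed.

Lemma Dfinvpow_shift j m v : Dfinvpow DG X j m (mapply (DG (X (m + 1)%Z)) v) = Dfinvpow DG X (S j) (m + 1) v.
Proof. induction j.
  - simpl. replace (m + 1 - 0)%Z with (m + 1)%Z by lia. auto.
  - change (Dfinvpow DG X (S j) m (mapply (DG (X (m + 1)%Z)) v)) with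
      (mapply (DG (X (m - Z.of_nat j)%Z)) (Dfinvpow DG X j m (mapply (DG (X (m + 1)%Z)) v))).
    rewrite IHj. change (Dfinvpow DG X (S (S j)) (m + 1) v) with (mapply (DG (X (m + 1 - Z.of_nat (S j))%Z)) (Dfinvpow DG X (S j) (m+1) v)).
    replace (m + 1 - Z.of_nat (S j))%Z with (m - Z.of_nat j)%Z by lia. auto. Qed.

Lemma consts eps : 0 < eps < eps0 -> exists C, 1 <= C /\
  (forall k j v, Es k v -> vnorm (Dfpow DF X j k v) <= C * lam ^ j * exp (eps * absZ k) * vnorm v) /\
  (forall k j v, Eu k v -> vnorm (Dfinvpow DG X j k v) <= C * lam ^ j * exp (eps * absZ k) * vnorm v) /\
  (forall k v, vnorm (ps k v) <= C * exp (eps * absZ k) * vnorm v) /\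
  (forall k v, vnorm (pu k v) <= C * exp (eps * absZ k) * vnorm v).
Proof. intros He. destruct (Hc eps He) as [c [H1 [H2 H3]]]. exists (Rmax c 1).
  pose proof (Rmax_l c 1). pose proof (Rmax_r c 1).
  assert (Hx : forall k, 1 <= exp (eps * absZ k)) by (intros; apply exp_ge1; pose proof (absZ_nonneg k); nra).
  split; [auto|]. split; [|split; [|split]].
  - intros k j v Hv. destruct j.
    + simpl. pose proof (Hx k). pose proof (vnorm_nonneg v).
      assert (1 <= Rmax c 1 * exp (eps * absZ k)) by nra. nra.
    + eapply Rle_trans; [apply H1; auto; lia|]. pose proof (pow_le lam (S j) ltac:(lra)). pose proof (Hx k). pose proof (vnorm_nonneg v).
      apply Rmult_le_compat_r; auto. apply Rmult_le_compat_r; [lra|]. apply Rmult_le_compat_r; auto.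
  - intros k j v Hv. destruct j.
    + simpl. pose proof (Hx k). pose proof (vnorm_nonneg v).
      assert (1 <= Rmax c 1 * exp (eps * absZ k)) by nra. nra.
    + eapply Rle_trans; [apply H2; auto; lia|]. pose proof (pow_le lam (S j) ltac:(lra)). pose proof (Hx k). pose proof (vnorm_nonneg v).
      apply Rmult_le_compat_r; auto. apply Rmult_le_compat_r; [lra|]. apply Rmult_le_compat_r; auto.
  - intros k v. destruct (H3 k v (ps k v) (pu k v) (ps_Es k v) (pu_Eu k v) (ps_pu k v)) as [A _].
    eapply Rle_trans; [apply A|]. pose proof (Hx k). pose proof (vnorm_nonneg v). apply Rmult_le_compat_r; auto. apply Rmult_le_compat_r; lra.
  - intros k v. destruct (H3 k v (ps k v) (pu k v) (ps_Es k v) (pu_Eu k v) (ps_pu k v)) as [_ A].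
    eapply Rle_trans; [apply A|]. pose proof (Hx k). pose proof (vnorm_nonneg v). apply Rmult_le_compat_r; auto. apply Rmult_le_compat_r; lra. Qed.


Lemma chain3 t w e C L E1 M E2 : 0 <= C -> 0 <= L -> 0 <= E1 -> 0 <= w -> 0 <= M ->
  t <= C * L * E1 * w -> w <= C * E1 * e -> e <= M * E2 -> t <= C * C * M * L * (E1 * E1 * E2).
Proof. intros. assert (C * L * E1 * w <= C * L * E1 * (C * E1 * e)) by (apply Rmult_le_compat_l; auto; repeat apply Rmult_le_pos; auto).
  assert (0 <= C * L * E1 * C * E1) by (repeat apply Rmult_le_pos; auto).
  assert (C * L * E1 * C * E1 * e <= C * L * E1 * C * E1 * (M * E2)) by (apply Rmult_le_compat_l; auto).
  replace (C * C * M * L * (E1 * E1 * E2)) with (C * L * E1 * C * E1 * (M * E2)) by ring.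
  replace (C * L * E1 * (C * E1 * e)) with (C * L * E1 * C * E1 * e) in H5 by ring. lra. Qed.

Definition Cgood eps C := 1 <= C /\ (forall k j v, Es k v -> vnorm (Dfpow DF X j k v) <= C * lam ^ j * exp (eps * absZ k) * vnorm v) /\ (forall k j v, Eu k v -> vnorm (Dfinvpow DG X j k v) <= C * lam ^ j * exp (eps * absZ k) * vnorm v) /\ (forall k v, vnorm (ps k v) <= C * exp (eps * absZ k) * vnorm v) /\ (forall k v, vnorm (pu k v) <= C * exp (eps * absZ k) * vnorm v).

Lemma consts' eps : 0 < eps < eps0 -> exists C, Cgood eps C.
Proof. apply consts. Qed.

Definition sterm (eta : seqR d) k j : vec d :=
  Dfpow DF X j (k - Z.of_nat j) (ps (k - Z.of_nat j) (eta (k - Z.of_nat j)%Z)).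
Definition uterm (eta : seqR d) k j : vec d :=
  Dfinvpow DG X (S j) (k + Z.of_nat (S j)) (pu (k + Z.of_nat (S j)) (eta (k + Z.of_nat (S j))%Z)).

Lemma exp3 e a z : exp (e * z) * exp (e * z) * exp (a * z) = exp ((2 * e + a) * z).
Proof. rewrite <- !exp_plus. f_equal. ring. Qed.

Lemma term_core eps C a M (eta : seqR d) m k (j : nat) (t w : vec d) L :
  Cgood eps C -> 0 <= eps -> 0 <= a -> 0 <= M -> 0 <= L ->
  (forall m, vnorm (eta m) <= M * exp (a * absZ m)) ->
  absZ m <= absZ k + INR j ->
  vnorm t <= C * L * exp (eps * absZ m) * vnorm w ->
  vnorm w <= C * exp (eps * absZ m) * vnorm (eta m) ->
  vnorm t <= C * C * M * exp ((2 * eps + a) * absZ k) * (L * exp (2 * eps + a) ^ j).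
Proof. intros HC He Ha HM HL Heta Hm H1 H2. destruct HC as [HC1 _].
  pose proof (chain3 (vnorm t) (vnorm w) (vnorm (eta m)) C L (exp (eps * absZ m)) M (exp (a * absZ m))
    ltac:(lra) HL ltac:(left; apply exp_pos) (vnorm_nonneg w) HM H1 H2 (Heta m)).
  rewrite exp3 in H. eapply Rle_trans; [apply H|].
  pose proof (exp_shift (2 * eps + a) k j m ltac:(lra) Hm).
  replace (C * C * M * exp ((2 * eps + a) * absZ k) * (L * exp (2 * eps + a) ^ j)) with
    (C * C * M * L * (exp (2 * eps + a) ^ j * exp ((2 * eps + a) * absZ k))) by ring.
  apply Rmult_le_compat_l; auto. repeat apply Rmult_le_pos; lra. Qed.

Lemma sterm_bound eps C a M (eta : seqR d) : Cgood eps C -> 0 <= eps -> 0 <= a -> 0 <= M ->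
  (forall m, vnorm (eta m) <= M * exp (a * absZ m)) -> forall k j,
  vnorm (sterm eta k j) <= C * C * M * exp ((2 * eps + a) * absZ k) * (lam * exp (2 * eps + a)) ^ j.
Proof. intros HC He Ha HM Heta k j. rewrite Rpow_mult_distr.
  pose proof HC as [_ [H1 [_ [H3 _]]]].
  apply (term_core eps C a M eta (k - Z.of_nat j)%Z k j _ (ps (k - Z.of_nat j) (eta (k - Z.of_nat j)%Z))); auto.
  - apply pow_le; lra.
  - apply absZ_sub.
  - unfold sterm. apply H1. apply ps_Es. Qed.

Lemma uterm_bound eps C a M (eta : seqR d) : Cgood eps C -> 0 <= eps -> 0 <= a -> 0 <= M ->
  lam * exp (2 * eps + a) <= 1 ->
  (forall m, vnorm (eta m) <= M * exp (a * absZ m)) -> forall k j,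
  vnorm (uterm eta k j) <= C * C * M * exp ((2 * eps + a) * absZ k) * (lam * exp (2 * eps + a)) ^ j.
Proof. intros HC He Ha HM Hq Heta k j. pose proof HC as [HC1 [_ [H2 [_ H4]]]].
  assert (vnorm (uterm eta k j) <= C * C * M * exp ((2 * eps + a) * absZ k) * (lam ^ (S j) * exp (2 * eps + a) ^ (S j))).
  { apply (term_core eps C a M eta (k + Z.of_nat (S j))%Z k (S j) _ (pu (k + Z.of_nat (S j)) (eta (k + Z.of_nat (S j))%Z))); auto.
    - apply pow_le; lra.
    - apply absZ_add.
    - unfold uterm. apply H2. apply pu_Eu. }
  eapply Rle_trans; [apply H|]. rewrite <- !Rpow_mult_distr. 
  assert (0 <= C * C * M * exp ((2 * eps + a) * absZ k)) by (pose proof (exp_pos ((2 * eps + a) * absZ k)); repeat apply Rmult_le_pos; lra).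
  apply Rmult_le_compat_l; auto. simpl. pose proof (exp_pos (2 * eps + a)).
  pose proof (pow_le (lam * exp (2 * eps + a)) j ltac:(nra)). 
  assert (0 <= lam * exp (2 * eps + a)) by nra. nra. Qed.


Lemma Es_shift k v : Es (k - 1)%Z v -> Es k (mapply (DF (X (k - 1)%Z)) v).
Proof. intros H. destruct (Hinv (k - 1)%Z) as [H1 _]. pose proof (H1 v H). replace (k - 1 + 1)%Z with k in H0 by lia. auto. Qed.
Lemma Eu_shift k v : Eu (k - 1)%Z v -> Eu k (mapply (DF (X (k - 1)%Z)) v).
Proof. intros H. destruct (Hinv (k - 1)%Z) as [_ [_ [H1 _]]]. pose proof (H1 v H). replace (k - 1 + 1)%Z with k in H0 by lia. auto. Qed.

Lemma Gamma_split (xi eta : seqR d) k : Gamma DF X xi k = eta k ->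
  ps k (eta k) = vsub (ps k (xi k)) (mapply (DF (X (k - 1)%Z)) (ps (k - 1)%Z (xi (k - 1)%Z))) /\
  pu k (eta k) = vsub (pu k (xi k)) (mapply (DF (X (k - 1)%Z)) (pu (k - 1)%Z (xi (k - 1)%Z))).
Proof. intros H. destruct (Hsplit k) as [Ss [Su _]].
  assert (E : eta k = vadd (vsub (ps k (xi k)) (mapply (DF (X (k - 1)%Z)) (ps (k - 1)%Z (xi (k - 1)%Z))))
                           (vsub (pu k (xi k)) (mapply (DF (X (k - 1)%Z)) (pu (k - 1)%Z (xi (k - 1)%Z))))).
  { rewrite <- H. unfold Gamma. rewrite (ps_pu k (xi k)) at 1. rewrite (ps_pu (k - 1)%Z (xi (k - 1)%Z)) at 1.
    rewrite mapply_add. vext. }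
  rewrite E. apply decomp.
  - apply sub_closed; auto. apply ps_Es. apply Es_shift, ps_Es.
  - apply sub_closed; auto. apply pu_Eu. apply Eu_shift, pu_Eu. Qed.

Lemma s_iter (xi eta : seqR d) k : (forall k, Gamma DF X xi k = eta k) -> forall J,
  ps k (xi k) = vadd (vsum (fun j => sterm eta k j) J) (Dfpow DF X J (k - Z.of_nat J) (ps (k - Z.of_nat J)%Z (xi (k - Z.of_nat J)%Z))).
Proof. intros HG J. induction J.
  - simpl. replace (k - 0)%Z with k by lia. vext.
  - rewrite IHJ. set (m0 := (k - Z.of_nat J)%Z).
    destruct (Gamma_split xi eta m0 (HG m0)) as [Hs _].
    assert (E1 : ps m0 (xi m0) = vadd (ps m0 (eta m0)) (mapply (DF (X (m0 - 1)%Z)) (ps (m0 - 1)%Z (xi (m0 - 1)%Z)))).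
    { rewrite Hs. vext. }
    rewrite E1, Dfpow_add.
    assert (E2 : Dfpow DF X J m0 (mapply (DF (X (m0 - 1)%Z)) (ps (m0 - 1)%Z (xi (m0 - 1)%Z))) =
                 Dfpow DF X (S J) (k - Z.of_nat (S J)) (ps (k - Z.of_nat (S J))%Z (xi (k - Z.of_nat (S J))%Z))).
    { replace (k - Z.of_nat (S J))%Z with (m0 - 1)%Z by (unfold m0; lia).
      rewrite <- Dfpow_shift. replace (m0 - 1 + 1)%Z with m0 by lia. auto. }
    rewrite E2. simpl vsum. change (sterm eta k J) with (Dfpow DF X J m0 (ps m0 (eta m0))). vext. Qed.

Lemma u_iter (xi eta : seqR d) k : (forall k, Gamma DF X xi k = eta k) -> forall J,
  pu k (xi k) = vsub (Dfinvpow DG X J (k + Z.of_nat J) (pu (k + Z.of_nat J)%Z (xi (k + Z.of_nat J)%Z))) (vsum (fun j => uterm eta k j) J).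
Proof. intros HG J. induction J.
  - simpl. replace (k + 0)%Z with k by lia. vext.
  - rewrite IHJ. set (m0 := (k + Z.of_nat J)%Z).
    destruct (Gamma_split xi eta (m0 + 1)%Z (HG (m0 + 1)%Z)) as [_ Hu].
    replace (m0 + 1 - 1)%Z with m0 in Hu by lia.
    assert (E1 : pu m0 (xi m0) = mapply (DG (X (m0 + 1)%Z)) (vsub (pu (m0 + 1)%Z (xi (m0 + 1)%Z)) (pu (m0 + 1)%Z (eta (m0 + 1)%Z)))).
    { replace (vsub (pu (m0 + 1)%Z (xi (m0 + 1)%Z)) (pu (m0 + 1)%Z (eta (m0 + 1)%Z))) with (mapply (DF (X m0)) (pu m0 (xi m0))).
      - symmetry. apply (orbit_inv F G DF DG x TD m0).
      - rewrite Hu. vext. }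
    rewrite E1, Dfinvpow_shift, Dfinvpow_sub.
    replace (m0 + 1)%Z with (k + Z.of_nat (S J))%Z by (unfold m0; lia).
    simpl vsum. change (uterm eta k J) with (Dfinvpow DG X (S J) (k + Z.of_nat (S J)) (pu (k + Z.of_nat (S J))%Z (eta (k + Z.of_nat (S J))%Z))). vext. Qed.

Lemma apriori eps C a M M' (xi eta : seqR d) : Cgood eps C -> 0 <= eps -> 0 <= a -> 0 <= M -> 0 <= M' ->
  lam * exp (2 * eps + a) < 1 ->
  (forall m, vnorm (eta m) <= M * exp (a * absZ m)) -> (forall m, vnorm (xi m) <= M' * exp (a * absZ m)) ->
  (forall k, Gamma DF X xi k = eta k) ->
  forall k, vnorm (xi k) <= Dc d * (2 * (Dc d * (INR d * (C * C * M * exp ((2 * eps + a) * absZ k) * / (1 - lam * exp (2 * eps + a)))))).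
Proof. intros HC He Ha HM HM' Hq Heta Hxi HG k.
  set (q := lam * exp (2 * eps + a)) in *. set (b := (2 * eps + a)) in *.
  assert (Hq0 : 0 <= q) by (unfold q; pose proof (exp_pos b); nra).
  set (K := C * C * M * exp (b * absZ k)). set (R := C * C * M' * exp (b * absZ k)).
  pose proof HC as [HC1 [H1 [H2 [H3 H4]]]].
  assert (HR : 0 <= R) by (unfold R; pose proof (exp_pos (b * absZ k)); repeat apply Rmult_le_pos; lra).
  pose proof (Dc_pos d) as HD.
  assert (Hs : vnorm (ps k (xi k)) <= Dc d * (INR d * (K * / (1 - q)))).
  { apply (limit_arg _ _ (Dc d * R) q); [lra|nra|]. intros J. rewrite (s_iter xi eta k HG J).
    eapply Rle_trans; [apply vnorm_add|].
    pose proof (vsum_bound (fun j => sterm eta k j) K q J ltac:(lra) (sterm_bound eps C a M eta HC He Ha HM Heta k)).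
    assert (vnorm (Dfpow DF X J (k - Z.of_nat J) (ps (k - Z.of_nat J)%Z (xi (k - Z.of_nat J)%Z))) <= R * q ^ J).
    { unfold R, q. rewrite Rpow_mult_distr.
      apply (term_core eps C a M' xi (k - Z.of_nat J)%Z k J _ (ps (k - Z.of_nat J)%Z (xi (k - Z.of_nat J)%Z))); auto.
      apply pow_le; lra. apply absZ_sub. apply H1. apply ps_Es. }
    nra. }
  assert (Hu : vnorm (pu k (xi k)) <= Dc d * (INR d * (K * / (1 - q)))).
  { apply (limit_arg _ _ (Dc d * R) q); [lra|nra|]. intros J. rewrite (u_iter xi eta k HG J).
    eapply Rle_trans; [apply vnorm_sub|].
    pose proof (vsum_bound (fun j => uterm eta k j) K q J ltac:(lra) (uterm_bound eps C a M eta HC He Ha HM (Rlt_le _ _ Hq) Heta k)).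
    assert (vnorm (Dfinvpow DG X J (k + Z.of_nat J) (pu (k + Z.of_nat J)%Z (xi (k + Z.of_nat J)%Z))) <= R * q ^ J).
    { unfold R, q. rewrite Rpow_mult_distr.
      apply (term_core eps C a M' xi (k + Z.of_nat J)%Z k J _ (pu (k + Z.of_nat J)%Z (xi (k + Z.of_nat J)%Z))); auto.
      apply pow_le; lra. apply absZ_add. apply H2. apply pu_Eu. }
    nra. }
  rewrite (ps_pu k (xi k)). eapply Rle_trans; [apply vnorm_add|]. fold b q K.
  apply Rmult_le_compat_l; lra. Qed.


Definition Ginv (eta : seqR d) : seqR d := fun k => vsub (vseries (sterm eta k)) (vseries (uterm eta k)).

Lemma Ginv_bound eps C a M (eta : seqR d) : Cgood eps C -> 0 <= eps -> 0 <= a -> 0 <= M ->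
  lam * exp (2 * eps + a) < 1 -> (forall m, vnorm (eta m) <= M * exp (a * absZ m)) ->
  forall k, vnorm (Ginv eta k) <= Dc d * (2 * (INR d * (C * C * M * exp ((2 * eps + a) * absZ k) * / (1 - lam * exp (2 * eps + a))))).
Proof. intros HC He Ha HM Hq Heta k. pose proof (exp_pos (2 * eps + a)).
  assert (Hq0 : 0 <= lam * exp (2 * eps + a)) by nra.
  unfold Ginv. eapply Rle_trans; [apply vnorm_sub|]. apply Rmult_le_compat_l; [pose proof (Dc_pos d); lra|].
  pose proof (vseries_bound (sterm eta k) _ _ (conj Hq0 Hq) (sterm_bound eps C a M eta HC He Ha HM Heta k)).
  pose proof (vseries_bound (uterm eta k) _ _ (conj Hq0 Hq) (uterm_bound eps C a M eta HC He Ha HM (Rlt_le _ _ Hq) Heta k)).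
  lra. Qed.

Lemma vseries_ext (w w' : nat -> vec d) : (forall j, w j = w' j) -> vseries w = vseries w'.
Proof. intros H. f_equal. apply functional_extensionality; auto. Qed.

Definition wterm (eta : seqR d) k j : vec d :=
  Dfinvpow DG X j (k + Z.of_nat j) (pu (k + Z.of_nat j)%Z (eta (k + Z.of_nat j)%Z)).

Lemma sterm_succ (eta : seqR d) k j : sterm eta k (S j) = mapply (DF (X (k - 1)%Z)) (sterm eta (k - 1)%Z j).
Proof. unfold sterm. replace (k - Z.of_nat (S j))%Z with (k - 1 - Z.of_nat j)%Z by lia. simpl Dfpow.
  replace (k - 1 - Z.of_nat j + Z.of_nat j)%Z with (k - 1)%Z by lia. auto. Qed.

Lemma wterm_succ (eta : seqR d) k j : wterm eta k (S j) = uterm eta k j.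
Proof. reflexivity. Qed.

Lemma uterm_pred (eta : seqR d) k j : mapply (DF (X (k - 1)%Z)) (uterm eta (k - 1)%Z j) = wterm eta k j.
Proof. unfold uterm, wterm. replace (k - 1 + Z.of_nat (S j))%Z with (k + Z.of_nat j)%Z by lia. simpl Dfinvpow.
  replace (k + Z.of_nat j - Z.of_nat j)%Z with k by lia.
  pose proof (proj2 (orbit_inv F G DF DG x TD (k - 1)%Z (Dfinvpow DG X j (k + Z.of_nat j) (pu (k + Z.of_nat j) (eta (k + Z.of_nat j)%Z))))).
  replace (k - 1 + 1)%Z with k in H by lia. auto. Qed.

Lemma wterm_0 (eta : seqR d) k : wterm eta k 0 = pu k (eta k).
Proof. unfold wterm. simpl. replace (k + 0)%Z with k by lia. auto. Qed.
Lemma sterm_0 (eta : seqR d) k : sterm eta k 0 = ps k (eta k).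
Proof. unfold sterm. simpl. replace (k - 0)%Z with k by lia. auto. Qed.

Lemma Ginv_solves eps C a M (eta : seqR d) : Cgood eps C -> 0 <= eps -> 0 <= a -> 0 <= M ->
  lam * exp (2 * eps + a) < 1 -> (forall m, vnorm (eta m) <= M * exp (a * absZ m)) ->
  forall k, Gamma DF X (Ginv eta) k = eta k.
Proof. intros HC He Ha HM Hq Heta k. pose proof (exp_pos (2 * eps + a)).
  assert (Hq0 : 0 <= lam * exp (2 * eps + a)) by nra.
  assert (Exs : forall k i, ex_series (fun j => sterm eta k j i)).
  { intros k' i. apply (vseries_ex _ _ _ (conj Hq0 Hq) (sterm_bound eps C a M eta HC He Ha HM Heta k')). }
  assert (Exu : forall k i, ex_series (fun j => uterm eta k j i)).
  { intros k' i. apply (vseries_ex _ _ _ (conj Hq0 Hq) (uterm_bound eps C a M eta HC He Ha HM (Rlt_le _ _ Hq) Heta k')). }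
  assert (Exw : forall k i, ex_series (fun j => wterm eta k j i)).
  { intros k' i. apply ex_series_incr_1. apply Exu. }
  unfold Gamma, Ginv. rewrite mapply_sub, !mapply_vseries by auto.
  rewrite (vseries_ext (fun j => mapply (DF (X (k - 1)%Z)) (sterm eta (k - 1)%Z j)) (fun j => sterm eta k (S j))) by (intros; rewrite sterm_succ; auto).
  rewrite (vseries_ext (fun j => mapply (DF (X (k - 1)%Z)) (uterm eta (k - 1)%Z j)) (wterm eta k)) by (intros; apply uterm_pred).
  rewrite (vseries_shift (sterm eta k)) by auto. rewrite (vseries_shift (wterm eta k)) by auto.
  rewrite sterm_0, wterm_0.
  rewrite (vseries_ext (fun j => wterm eta k (S j)) (uterm eta k)) by (intros; apply wterm_succ).
  transitivity (vadd (ps k (eta k)) (pu k (eta k))); [vext|symmetry; apply ps_pu]. Qed.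


Lemma Gamma_N (eta : seqR d) : inN eta -> inN (Gamma DF X eta).
Proof. intros H. destruct TD as [HF [_ [dF _]]]. destruct (DF_bounded F DF HF dF) as [K [HK0 HK]].
  apply inN_of_bound. intros delta Hd. destruct (global_bound eta H (delta / 2) ltac:(lra)) as [M [HM HMb]].
  exists (Dc d * (M + K * (M * exp (delta / 2)))), (delta / 2). split; [lra|]. intros k.
  unfold Gamma. eapply Rle_trans; [apply vnorm_sub|].
  pose proof (mapply_bound (DF (X (k - 1)%Z)) (eta (k - 1)%Z)). pose proof (HK (X (k - 1)%Z)).
  pose proof (HMb (k - 1)%Z). pose proof (HMb k). pose proof (vnorm_nonneg (eta (k - 1)%Z)).
  assert (E : exp (delta / 2 * absZ (k - 1)) <= exp (delta / 2) * exp (delta / 2 * absZ k)).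
  { rewrite <- exp_plus. apply exp_mono_le. pose proof (absZ_pred k). nra. }
  assert (vnorm (mapply (DF (X (k - 1)%Z)) (eta (k - 1)%Z)) <= K * (M * exp (delta / 2) * exp (delta / 2 * absZ k))).
  { eapply Rle_trans; [apply H0|]. apply Rmult_le_compat; auto; [apply mnorm_nonneg|].
    eapply Rle_trans; [apply H2|]. rewrite Rmult_assoc. apply Rmult_le_compat_l; auto. }
  pose proof (Dc_pos d). replace (Dc d * (M + K * (M * exp (delta / 2))) * exp (delta / 2 * absZ k)) with
    (Dc d * (M * exp (delta / 2 * absZ k) + K * (M * exp (delta / 2) * exp (delta / 2 * absZ k)))) by ring.
  apply Rmult_le_compat_l; lra. Qed.

Lemma params delta : delta > 0 -> exists eps a, 0 < eps < eps0 /\ 0 < a /\ 2 * eps + a < delta /\ lam * exp (2 * eps + a) < 1.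
Proof. intros Hd. destruct (lam_gap lam Hlam) as [T [HT HlT]].
  set (e := Rmin (eps0 / 2) (Rmin (delta / 8) (T / 8))).
  assert (He : 0 < e) by (unfold e; repeat apply Rmin_pos; lra).
  pose proof (Rmin_l (eps0 / 2) (Rmin (delta / 8) (T / 8))). pose proof (Rmin_r (eps0 / 2) (Rmin (delta / 8) (T / 8))).
  pose proof (Rmin_l (delta / 8) (T / 8)). pose proof (Rmin_r (delta / 8) (T / 8)). fold e in H, H0.
  exists e, e. split; [lra|]. split; [lra|]. split; [lra|].
  eapply Rle_lt_trans; [|apply HlT]. apply Rmult_le_compat_l; [lra|]. apply exp_mono_le. lra. Qed.

Lemma Ginv_N (eta : seqR d) : inN eta -> inN (Ginv eta).
Proof. intros H. apply inN_of_bound. intros delta Hd.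
  destruct (params delta Hd) as [eps [a [He [Ha [Hb Hq]]]]]. destruct (consts' eps He) as [C HC].
  destruct (global_bound eta H a Ha) as [M [HM HMb]].
  exists (Dc d * (2 * (INR d * (C * C * M * / (1 - lam * exp (2 * eps + a)))))), (2 * eps + a).
  split; [lra|]. intros k. eapply Rle_trans; [apply (Ginv_bound eps C a M eta HC); auto; lra|]. right; ring. Qed.

Lemma Ginv_right (eta : seqR d) : inN eta -> forall k, Gamma DF X (Ginv eta) k = eta k.
Proof. intros H. destruct (params 1 ltac:(lra)) as [eps [a [He [Ha [Hb Hq]]]]]. destruct (consts' eps He) as [C HC].
  destruct (global_bound eta H a Ha) as [M [HM HMb]].
  apply (Ginv_solves eps C a M eta HC); auto; lra. Qed.

Lemma Gamma_sub (a b : seqR d) k : Gamma DF X (seqsub a b) k = vsub (Gamma DF X a k) (Gamma DF X b k).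
Proof. unfold Gamma, seqsub. rewrite mapply_sub. vext. Qed.

Lemma inN_sub (a b : seqR d) : inN a -> inN b -> inN (seqsub a b).
Proof. intros Ha Hb. apply inN_of_bound. intros delta Hd.
  destruct (global_bound a Ha (delta / 2) ltac:(lra)) as [M1 [H1 B1]].
  destruct (global_bound b Hb (delta / 2) ltac:(lra)) as [M2 [H2 B2]].
  exists (Dc d * (M1 + M2)), (delta / 2). split; [lra|]. intros k. unfold seqsub.
  eapply Rle_trans; [apply vnorm_sub|]. pose proof (B1 k). pose proof (B2 k). pose proof (Dc_pos d).
  replace (Dc d * (M1 + M2) * exp (delta / 2 * absZ k)) with (Dc d * (M1 * exp (delta / 2 * absZ k) + M2 * exp (delta / 2 * absZ k))) by ring.
  apply Rmult_le_compat_l; lra. Qed.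

Lemma Gamma_inj (xi : seqR d) : inN xi -> (forall k, Gamma DF X xi k = vzero) -> forall k, xi k = vzero.
Proof. intros H HG k. destruct (params 1 ltac:(lra)) as [eps [a [He [Ha [Hb Hq]]]]]. destruct (consts' eps He) as [C HC].
  destruct (global_bound xi H a Ha) as [M' [HM' HMb]].
  pose proof (apriori eps C a 0 M' xi (fun _ => vzero) HC ltac:(lra) ltac:(lra) ltac:(lra) HM' Hq).
  assert (vnorm (xi k) <= 0).
  { eapply Rle_trans; [apply H0; auto|]. intros m. rewrite vnorm_vzero. lra. right; ring. }
  apply vnorm_zero_eq; auto. Qed.

Lemma Ginv_left (eta : seqR d) : inN eta -> Ginv (Gamma DF X eta) = eta.
Proof. intros H. pose proof (Gamma_N eta H) as HG. pose proof (Ginv_N _ HG) as HGi.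
  assert (Z : forall k, seqsub (Ginv (Gamma DF X eta)) eta k = vzero).
  { apply Gamma_inj. apply inN_sub; auto. intros k. rewrite Gamma_sub, Ginv_right by auto. vext. }
  apply functional_extensionality; intros k. pose proof (Z k). apply functional_extensionality; intros i.
  assert (Hi := f_equal (fun z => z i) H0). unfold seqsub, vsub, vzero in Hi. simpl in Hi. lra. Qed.

Lemma nat_above y : exists N : nat, (0 < N)%nat /\ y < INR N.
Proof. destruct (archimed (Rabs y)) as [H1 _]. exists (S (Z.to_nat (up (Rabs y)))). split; [lia|].
  pose proof (Rle_abs y). rewrite S_INR, INR_IZR_INZ.
  destruct (Z_le_gt_dec 0 (up (Rabs y))).
  - rewrite Z2Nat.id by auto. lra.
  - assert (IZR (up (Rabs y)) < 0) by (apply IZR_lt; lia). pose proof (Rabs_pos y). lra. Qed.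

Lemma Ginv_cont : continuousN Ginv.
Proof. intros V HV eta [Heta HVeta]. split; auto.
  destruct (HV _ HVeta) as [_ [n [Hn [r [Hr Hball]]]]].
  destruct (lam_gap lam Hlam) as [T [HT HlT]].
  assert (HnR : 0 < INR n) by (apply lt_0_INR; auto).
  set (e := Rmin (eps0 / 2) (Rmin (1 / (4 * INR n)) (T / 4))).
  assert (Hq4 : 0 < 1 / (4 * INR n)) by (apply Rdiv_lt_0_compat; lra).
  assert (He : 0 < e) by (unfold e; repeat apply Rmin_pos; lra).
  pose proof (Rmin_l (eps0 / 2) (Rmin (1 / (4 * INR n)) (T / 4))). pose proof (Rmin_r (eps0 / 2) (Rmin (1 / (4 * INR n)) (T / 4))).
  pose proof (Rmin_l (1 / (4 * INR n)) (T / 4)). pose proof (Rmin_r (1 / (4 * INR n)) (T / 4)). fold e in H, H0.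
  destruct (nat_above (2 * INR n + 2 / T)) as [n' [Hn' Hn'b]].
  assert (Hn'R : 0 < INR n') by (apply lt_0_INR; auto).
  set (a := 1 / INR n').
  assert (Ha : 0 < a) by (unfold a; apply Rdiv_lt_0_compat; lra).
  assert (Ha1 : a <= 1 / (2 * INR n)).
  { unfold a. unfold Rdiv. rewrite !Rmult_1_l. left. apply Rinv_lt_contravar; [nra|].
    assert (0 < 2 / T) by (apply Rdiv_lt_0_compat; lra). lra. }
  assert (Ha2 : a <= T / 2).
  { unfold a. assert (2 / T < INR n') by (pose proof (pos_INR n); lra).
    apply Rmult_lt_compat_r with (r := T) in H3; [|lra]. replace (2 / T * T) with 2 in H3 by (field; lra).
    apply Rmult_le_reg_r with (INR n'); [lra|]. replace (1 / INR n' * INR n') with 1 by (field; lra). lra. }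
  assert (Hb1 : 2 * e + a <= 1 / INR n).
  { assert (1 / (4 * INR n) * 2 + 1 / (2 * INR n) = 1 / INR n) by (field; lra). lra. }
  assert (Hq : lam * exp (2 * e + a) < 1).
  { eapply Rle_lt_trans; [|apply HlT]. apply Rmult_le_compat_l; [lra|]. apply exp_mono_le. lra. }
  destruct (consts' e ltac:(lra)) as [C HC].
  set (Kap := Dc d * (2 * (Dc d * (INR d * (C * C * 1 * / (1 - lam * exp (2 * e + a))))))).
  assert (HKap : 0 <= Kap).
  { unfold Kap. pose proof (Dc_pos d). pose proof (pos_INR d). pose proof (proj1 HC). 
    assert (0 < / (1 - lam * exp (2 * e + a))) by (apply Rinv_0_lt_compat; lra).
    repeat apply Rmult_le_pos; lra. }
  exists n'. split; auto. exists (r / (2 * (Kap + 1))). split; [apply Rdiv_lt_0_compat; lra|].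
  intros zeta Hzeta [r'' [Hr'' Hzb]]. split; auto.
  assert (Hr0 : 0 <= r'').
  { pose proof (Hzb 0%Z). pose proof (exp_pos (- (absZ 0 / INR n'))). pose proof (vnorm_nonneg (seqsub zeta eta 0%Z)). nra. }
  apply Hball; [apply Ginv_N; auto|].
  set (xi := seqsub (Ginv zeta) (Ginv eta)).
  assert (Hxi : inN xi) by (apply inN_sub; apply Ginv_N; auto).
  destruct (global_bound xi Hxi a Ha) as [M' [HM' HMb]].
  assert (Htheta : forall m, vnorm (seqsub zeta eta m) <= r'' * exp (a * absZ m)).
  { intros m. pose proof (Hzb m). replace (a * absZ m) with (absZ m / INR n') by (unfold a; field; lra).
    replace (vnorm (seqsub zeta eta m)) with (exp (- (absZ m / INR n')) * vnorm (seqsub zeta eta m) * exp (absZ m / INR n')).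
    - apply Rmult_le_compat_r; auto. left; apply exp_pos.
    - rewrite Rmult_comm, <- Rmult_assoc, <- exp_plus. replace (absZ m / INR n' + - (absZ m / INR n')) with 0 by ring.
      rewrite exp_0; ring. }
  assert (HG : forall k, Gamma DF X xi k = seqsub zeta eta k).
  { intros k. unfold xi. rewrite Gamma_sub, !Ginv_right by auto. reflexivity. }
  pose proof (apriori e C a r'' M' xi (seqsub zeta eta) HC ltac:(lra) ltac:(lra) Hr0 HM' Hq Htheta HMb HG) as Hap.
  exists (Kap * r''). split.
  - assert (Kap * r'' <= Kap * (r / (2 * (Kap + 1)))) by (apply Rmult_le_compat_l; lra).
    assert (Kap * (r / (2 * (Kap + 1))) < r).
    { replace (Kap * (r / (2 * (Kap + 1)))) with (r * (Kap / (2 * (Kap + 1)))) by (field; lra).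
      assert (Kap / (2 * (Kap + 1)) < 1).
      { apply Rmult_lt_reg_r with (2 * (Kap + 1)); [lra|]. replace (Kap / (2 * (Kap + 1)) * (2 * (Kap + 1))) with Kap by (field; lra). lra. }
      nra. }
    lra.
  - intros k. pose proof (Hap k).
    replace (Dc d * (2 * (Dc d * (INR d * (C * C * r'' * exp ((2 * e + a) * absZ k) * / (1 - lam * exp (2 * e + a)))))))
      with (Kap * r'' * exp ((2 * e + a) * absZ k)) in H3 by (unfold Kap; ring).
    assert (exp (- (absZ k / INR n)) * exp ((2 * e + a) * absZ k) <= 1).
    { rewrite <- exp_plus. rewrite <- exp_0. apply exp_mono_le. pose proof (absZ_nonneg k).
      replace (absZ k / INR n) with (1 / INR n * absZ k) by (field; lra). nra. }
    pose proof (exp_pos (- (absZ k / INR n))). pose proof (exp_pos ((2 * e + a) * absZ k)).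
    assert (0 <= Kap * r'') by nra.
    apply Rle_trans with (exp (- (absZ k / INR n)) * (Kap * r'' * exp ((2 * e + a) * absZ k))).
    + apply Rmult_le_compat_l; lra.
    + nra. Qed.

Lemma main_sec : (forall eta, inN eta -> inN (Gamma DF X eta)) /\
  exists Ginv : seqR d -> seqR d,
    (forall eta, inN eta -> inN (Ginv eta)) /\
    (forall eta, inN eta -> Gamma DF X (Ginv eta) = eta) /\
    (forall eta, inN eta -> Ginv (Gamma DF X eta) = eta) /\
    continuousN Ginv.
Proof. split; [apply Gamma_N|]. exists Ginv. split; [apply Ginv_N|]. split.
  - intros eta H. apply functional_extensionality. apply Ginv_right; auto.
  - split; [apply Ginv_left|apply Ginv_cont]. Qed.

End Main.

Theorem corollary3p7 (d : nat) (F G : vec d -> vec d) (DF DG : vec d -> mat d)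
  (x : vec d) :
  torus_C1_diffeo F G DF DG ->
  regularly_hyperbolic F G DF DG x ->
  (forall eta, inN eta -> inN (Gamma DF (orbit F G x) eta)) /\
  exists Ginv : seqR d -> seqR d,
    (forall eta, inN eta -> inN (Ginv eta)) /\
    (forall eta, inN eta -> Gamma DF (orbit F G x) (Ginv eta) = eta) /\
    (forall eta, inN eta -> Ginv (Gamma DF (orbit F G x) eta) = eta) /\
    continuousN Ginv.
Proof.
  intros TD RH. destruct RH as [lam [Hlam [Es [Eu [Hsplit [Hinv [eps0 [Heps0 Hc]]]]]]]].
  eapply main_sec; eauto.
Qed.
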